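(* There exist Euclidean self-orthogonal linear codes with each of the following parameters: over $\mathbb{F}_4$: $[8,2,4]_4$, $[8,3,4]_4$, $[8,4,4]_4$; over $\mathbb{F}_8$: $[8,3,4]_8$, $[8,4,4]_8$, $[10,4,5]_8$, $[10,5,4]_8$, $[12,4,6]_8$, $[12,5,6]_8$, $[12,6,5]_8$, $[14,5,7]_8$, $[14,6,6]_8$, $[14,7,6]_8$, $[16,5,8]_8$, $[16,6,8]_8$, $[16,7,6]_8$, $[16,8,6]_8$.
   Context: $[n,k,d]_q$ denotes a linear code over $\mathbb{F}_q$ of length $n$, dimension $k$, minimum Hamming distance $d$. A code $\mathcal{C}$ is Euclidean self-orthogonal if $\mathcal{C}\subseteq\mathcal{C}^{\perp_E}$, where $\perp_E$ is the dual under $\sum_ix_iy_i$ (self-dual when equality holds). *)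

(* Defs.v *)
From HB Require Import structures.
From mathcomp Require Import all_boot all_order all_algebra all_field.
Set Implicit Arguments. Unset Strict Implicit. Unset Printing Implicit Defensive.
Import GRing.Theory.
Local Open Scope ring_scope.

Definition hamming_dist (F : fieldType) (n : nat) (x y : 'rV[F]_n) : nat :=
  #|[set i : 'I_n | x 0 i != y 0 i]|.

Definition euclid_ip (F : fieldType) (n : nat) (x y : 'rV[F]_n) : F :=
  \sum_(i < n) x 0 i * y 0 i.

Definition euclid_self_orthogonal (F : fieldType) (n : nat)
    (C : {vspace 'rV[F]_n}) : Prop :=
  forall x y, x \in C -> y \in C -> euclid_ip x y = 0.

Definition min_distance_is (F : fieldType) (n : nat)
    (C : {vspace 'rV[F]_n}) (d : nat) : Prop :=
  (exists x y, [/\ x \in C, y \in C, x != y & hamming_dist x y = d]) /\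
  (forall x y, x \in C -> y \in C -> x != y -> (d <= hamming_dist x y)%N).

Definition is_nkd_code (F : fieldType) (n : nat) (C : {vspace 'rV[F]_n})
    (k d : nat) : Prop :=
  \dim C = k /\ min_distance_is C d.

Definition exists_SO_code (F : fieldType) (n k d : nat) : Prop :=
  exists C : {vspace 'rV[F]_n}, is_nkd_code C k d /\ euclid_self_orthogonal C.

(* Main.v *)
From HB Require Import structures.
From mathcomp Require Import all_boot all_order all_algebra all_field ring zify.
Require Import Defs.
Set Implicit Arguments. Unset Strict Implicit. Unset Printing Implicit Defensive.
Import GRing.Theory.

Definition mask (n : nat) (J : seq nat) : seq bool := mkseq (fun j => j \in J) n.

Fixpoint cover (r t : nat) (Js : seq (seq bool)) : bool :=
  match r with
  | 0 => Js != [::]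
  | r'.+1 =>
    if t is t'.+1 then
      has (all negb) Js ||
      (cover r' t' [seq behead J | J <- Js & ~~ head false J] &&
       cover r' t (map behead Js))
    else Js != [::]
  end.

Section Concrete.
Variable E : eqType.
Variables (e0 e1 : E) (eadd emul : E -> E -> E) (einv : E -> E).

Definition ent (A : seq (seq E)) (i j : nat) : E := nth e0 (nth [::] A i) j.
Definition esum (f : nat -> E) (s : nat) : E :=
  foldr (fun l acc => eadd (f l) acc) e0 (iota 0 s).
Definition matmul (r s t : nat) (A B : seq (seq E)) : seq (seq E) :=
  mkseq (fun i => mkseq (fun j => esum (fun l => emul (ent A i l) (ent B l j)) s) t) r.
Definition idm (k : nat) : seq (seq E) :=
  mkseq (fun i => mkseq (fun j => if i == j then e1 else e0) k) k.
Definition colsub (k : nat) (S : seq nat) (G : seq (seq E)) : seq (seq E) :=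
  mkseq (fun i => mkseq (fun j => ent G i (nth 0 S j)) (size S)) k.

(* untrusted Gauss-Jordan (characteristic 2) *)
Definition scale c (r : seq E) := map (emul c) r.
Definition addrow (r1 r2 : seq E) := map (fun p => eadd p.1 p.2) (zip r1 r2).
Definition elimr c (p r : seq E) := addrow r (scale (nth e0 r c) p).
Fixpoint gj (cols : seq nat) (done : seq (nat * seq E)) (rest : seq (seq E)) :=
  match cols with
  | [::] => done
  | c :: cs =>
    let i := find (fun r => nth e0 r c != e0) rest in
    if i < size rest then
      let p := nth [::] rest i in
      let p' := scale (einv (nth e0 p c)) p in
      gj cs ((c, p') :: [seq (x.1, elimr c p' x.2) | x <- done])
         [seq elimr c p' r | r <- take i rest ++ drop i.+1 rest]
    else gj cs done rest
  end.
Definition rinv (k s : nat) (A : seq (seq E)) : seq (seq E) :=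
  let aug := mkseq (fun i => mkseq (fun j => ent A i j) s ++ nth [::] (idm k) i) k in
  let res := gj (iota 0 s) [::] aug in
  mkseq (fun j => match [seq x.2 | x <- res & x.1 == j] with
                  | r :: _ => drop s r | [::] => nseq k e0 end) s.

Definition checkS k G S :=
  matmul k (size S) k (colsub k S G) (rinv k (size S) (colsub k S G)) == idm k.

Definition check_code (n k d : nat) (G : seq (seq E)) (Js : seq (seq nat)) : bool :=
  [&& 0 < d,
      count (fun j => ent G 0 j != e0) (iota 0 n) == d,
      all (fun i => all (fun j => esum (fun l => emul (ent G i l) (ent G j l)) n == e0)
                         (iota 0 k)) (iota 0 k),
      all (fun J => all (fun j => j < n) J && checkS k G J) Js
    & cover n d.-1 (map (mask n) Js)].
End Concrete.

Definition E4 := (bool * bool)%type.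
Definition e04 : E4 := (false, false).
Definition e14 : E4 := (true, false).
Definition add4 (x y : E4) : E4 :=
  let: (x0, x1) := x in let: (y0, y1) := y in (addb x0 y0, addb x1 y1).
Definition mul4 (x y : E4) : E4 :=
  let: (x0, x1) := x in let: (y0, y1) := y in
  (addb (x0 && y0) (x1 && y1), addb (addb (x0 && y1) (x1 && y0)) (x1 && y1)).
Definition all4 : seq E4 := [:: (false,false); (true,false); (false,true); (true,true)].
Definition inv4 (x : E4) : E4 := head e04 [seq y <- all4 | mul4 x y == e14].
Definition c4 (x : nat) : E4 := (odd x, odd x./2).

Definition E8 := (bool * bool * bool)%type.
Definition e08 : E8 := (false, false, false).
Definition e18 : E8 := (true, false, false).
Definition add8 (x y : E8) : E8 :=
  let: (x0, x1, x2) := x in let: (y0, y1, y2) := y in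
  (addb x0 y0, addb x1 y1, addb x2 y2).
Definition mul8 (x y : E8) : E8 :=
  let: (x0, x1, x2) := x in let: (y0, y1, y2) := y in
  (addb (addb (x0 && y0) (x1 && y2)) (x2 && y1),
   addb (addb (addb (addb (x0 && y1) (x1 && y0)) (x1 && y2)) (x2 && y1)) (x2 && y2),
   addb (addb (addb (x0 && y2) (x1 && y1)) (x2 && y0)) (x2 && y2)).
Definition c8 (x : nat) : E8 := (odd x, odd x./2, odd x./2./2).
Definition all8 : seq E8 := map c8 (iota 0 8).
Definition inv8 (x : E8) : E8 := head e08 [seq y <- all8 | mul8 x y == e18].

Lemma nth_true_has (T : seq bool) i : nth false T i -> has id T.
Proof.
elim: T i => [|b T IH] [|i] //=; first by move=> ->.
by move/IH ->; rewrite orbT.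
Qed.

Lemma all_negb_nth (J : seq bool) i : all negb J -> ~~ nth false J i.
Proof. by elim: J i => [|b J IH] [|i] //= /andP [hb hJ]; [exact: hb | exact: IH]. Qed.

Lemma nth_behead (J : seq bool) i : nth false (behead J) i = nth false J i.+1.
Proof. by case: J => [|b J] //=; rewrite !nth_nil. Qed.

Lemma cover_ok r t Js : cover r t Js ->
  forall T : seq bool, size T = r -> count id T <= t ->
  exists2 J, J \in Js & forall i, nth false T i -> ~~ nth false J i.
Proof.
have anyJ (Js' : seq (seq bool)) (T : seq bool) : Js' != [::] -> ~~ has id T ->
    exists2 J, J \in Js' & forall i, nth false T i -> ~~ nth false J i.
  case: Js' => [//|J Js'] _ hT; exists J; first by rewrite inE eqxx.
  by move=> i /nth_true_has hT'; move: hT; rewrite hT'.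
elim: r t Js => [|r IH] t Js /=.
  move=> HJ [|//] _ _; apply: anyJ => //.
case: t => [|t].
  move=> HJ T _ cT; apply: anyJ => //; by rewrite has_count -leqNgt.
move=> /orP [/hasP [J JJ HJ] | /andP [C1 C2]] T sT cT.
  by exists J => // i _; apply: all_negb_nth.
case: T sT cT => [//|b T] /= [sT] cT.
case: b cT => /= cT.
  have [J' HJ' H'] := IH _ _ C1 T sT cT.
  case/mapP: HJ' => J; rewrite mem_filter => /andP [hJ JJ] eJ; subst J'.
  exists J => // [[|i]] /=; first by move=> _; case: J hJ {JJ H'}.
  by move/H'; rewrite nth_behead.
have [J' HJ' H'] := IH _ _ C2 T sT cT.
case/mapP: HJ' => J JJ eJ; subst J'.
exists J => // [[|i]] //= /H'; by rewrite nth_behead.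
Qed.

Lemma card_iota n (Q : pred 'I_n) (Q' : pred nat) :
  (forall i : 'I_n, Q' i = Q i) -> #|[set i | Q i]| = count Q' (iota 0 n).
Proof.
move=> H; rewrite cardsE cardE /enum_mem size_filter -val_enum_ord count_map -enumT.
by apply: eq_count => i /=; rewrite H.
Qed.

Local Open Scope ring_scope.

Section Sound.
Variable F : fieldType.
Variable E : eqType.
Variables (e0 e1 : E) (eadd emul : E -> E -> E) (einv : E -> E) (phi : E -> F).
Hypotheses (phi0 : phi e0 = 0) (phi1 : phi e1 = 1)
  (phiD : forall x y, phi (eadd x y) = phi x + phi y)
  (phiM : forall x y, phi (emul x y) = phi x * phi y)
  (phi_eq0 : forall x, phi x = 0 -> x = e0).

Definition phiMx r t (A : seq (seq E)) : 'M[F]_(r, t) :=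
  \matrix_(i, j) phi (ent e0 A i j).

Lemma phi_esum f s : phi (esum e0 eadd f s) = \sum_(l < s) phi (f l).
Proof.
rewrite /esum -(big_mkord xpredT (fun l => phi (f l))) /index_iota subn0.
elim: (iota 0 s) => [|x l IH] /=; first by rewrite big_nil phi0.
by rewrite big_cons phiD IH.
Qed.

Lemma phi_matmul r s t A B :
  phiMx r t (matmul e0 eadd emul r s t A B) = phiMx r s A *m phiMx s t B.
Proof.
apply/matrixP => i j; rewrite !mxE /ent /matmul nth_mkseq // nth_mkseq // phi_esum.
by apply: eq_bigr => l _; rewrite phiM !mxE.
Qed.

Lemma phi_idm k : phiMx k k (idm e0 e1 k) = 1%:M.
Proof.
apply/matrixP => i j; rewrite !mxE /ent /idm nth_mkseq // nth_mkseq //.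
case: (eqVneq i j) => [->|nij]; rewrite ?eqxx ?phi1 //.
by have /negbTE -> : (i : nat) != j by []; rewrite phi0.
Qed.

Lemma phi_neq0 x : (phi x != 0) = (x != e0).
Proof. by congr negb; apply/eqP/eqP => [/phi_eq0|->]. Qed.

Lemma core n k d G Js :
  all (fun J => all (fun j => j < n)%N J && checkS e0 e1 eadd emul einv k G J) Js ->
  cover n d.-1 (map (mask n) Js) ->
  forall u : 'rV[F]_k,
  leq #|[set i : 'I_n | (u *m phiMx k n G) 0 i != 0]|.+1 d -> u = 0.
Proof.
move=> Hall Hcov u Hcard.
set w := u *m phiMx k n G.
pose T := mkseq (fun j => [exists i : 'I_n, (val i == j) && (w 0 i != 0)]) n.
have cT : (count id T <= d.-1)%N.
  have -> : count id T = #|[set i : 'I_n | w 0 i != 0]|.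
    rewrite /T /mkseq count_map; symmetry; apply: card_iota => i /=.
    apply/existsP/idP => [[i' /andP [/eqP /val_inj -> ->]] // | H].
    by exists i; rewrite eqxx H.
  by move: Hcard; case: (d) => [|d'] //.
have [J' HJ' H'] := cover_ok Hcov (size_mkseq _ _) cT.
case/mapP: HJ' => J JJ HJ'; subst J'.
have /andP [Jn HJ] := allP Hall J JJ.
move: HJ; rewrite /checkS => /eqP Hm.
set A := colsub e0 k J G in Hm.
set M := rinv e0 e1 eadd emul einv k (size J) A in Hm.
have HA : u *m phiMx k (size J) A = 0.
  apply/rowP => l; rewrite !mxE.
  have lJ : nth 0%N J l \in J by rewrite mem_nth.
  have jn : (nth 0%N J l < n)%N by apply: (allP Jn).
  have Hw : w 0 (Ordinal jn) == 0.
    apply: contraT => nz.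
    have : nth false T (nth 0%N J l).
      rewrite /T nth_mkseq //; apply/existsP; exists (Ordinal jn); by rewrite eqxx nz.
    by move/H'; rewrite /mask nth_mkseq // lJ.
  transitivity (w 0 (Ordinal jn)); last exact/eqP.
  rewrite /w mxE; apply: eq_bigr => i _.
  by rewrite !mxE /A /colsub /ent nth_mkseq // nth_mkseq.
have := congr1 (phiMx k k) Hm; rewrite phi_matmul phi_idm => H1.
by rewrite -[u]mulmx1 -H1 mulmxA HA mul0mx.
Qed.

Lemma hamming_dist0 n (x : 'rV[F]_n) : hamming_dist x x = 0%N.
Proof.
rewrite /hamming_dist; apply/eqP; rewrite cards_eq0; apply/eqP/setP => i.
by rewrite !inE eqxx.
Qed.

Lemma code_sound n k d G Js :
  check_code e0 e1 eadd emul einv n k.+1 d G Js -> exists_SO_code F n k.+1 d.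
Proof.
case/and5P => d0 Hw Hg Hs Hcov.
set Gf := phiMx k.+1 n G.
pose f : 'Hom('rV[F]_k.+1, 'rV[F]_n) := linfun (@mulmxr F 1 k.+1 n Gf).
have fE u : f u = u *m Gf by rewrite lfunE.
have core' := core Hs Hcov.
have inj : injective f.
  move=> u v; rewrite !fE => /eqP; rewrite -subr_eq0 -mulmxBl => /eqP H.
  apply/eqP; rewrite -subr_eq0; apply/eqP; apply: core'.
  have -> : [set i : 'I_n | ((u - v) *m Gf) 0 i != 0] = set0.
    by apply/setP => i; rewrite !inE H mxE eqxx.
  by rewrite cards0.
have memC x : x \in limg f -> exists u, x = u *m Gf.
  by case/memv_imgP => u _ ->; exists u; rewrite fE.
have inC u : u *m Gf \in limg f by rewrite -fE memv_img ?memvf.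
exists (limg f); split; first split.
- rewrite limg_dim_eq ?dimvf /dim /= ?mul1n //.
  by rewrite (eqP (introT lker0P inj)) capv0.
- split.
  + have hd : hamming_dist (row 0 Gf) 0 = d.
      rewrite /hamming_dist -(eqP Hw); apply: card_iota => i.
      by rewrite !mxE phi_neq0.
    exists (row 0 Gf), 0; split => //; first by rewrite rowE inC.
      exact: mem0v.
    apply/eqP => H; move: hd; rewrite H hamming_dist0 => h0.
    by move: d0; rewrite -h0.
  + move=> x y Hx Hy Hxy.
    have [u Hu] := memC _ (memvB Hx Hy).
    rewrite leqNgt; apply/negP => Hlt.
    have Hset : [set i : 'I_n | (u *m Gf) 0 i != 0] = [set i | x 0 i != y 0 i].
      apply/setP => i; rewrite !inE -Hu !mxE; congr negb.
      by apply/idP/idP => /eqP H; apply/eqP; [apply/subr0_eq | rewrite H subrr].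
    have u0 : u = 0 by apply: core'; rewrite Hset.
    by move: Hxy; rewrite -subr_eq0 Hu u0 mul0mx eqxx.
- have gram : Gf *m Gf^T = 0.
    apply/matrixP => i j; rewrite !mxE.
    have Hi : (i : nat) \in iota 0 k.+1 by rewrite mem_iota /=.
    have Hj : (j : nat) \in iota 0 k.+1 by rewrite mem_iota /=.
    have Hij := allP (allP Hg i Hi) j Hj.
    transitivity (phi (esum e0 eadd (fun l => emul (ent e0 G i l) (ent e0 G j l)) n));
      last by rewrite (eqP Hij) phi0.
    rewrite phi_esum; apply: eq_bigr => l _.
    by rewrite phiM !mxE.
  move=> x y /memC [u ->] /memC [v ->].
  have : (u *m Gf *m (v *m Gf)^T) 0 0 = 0.
    by rewrite trmx_mul !mulmxA -(mulmxA u) gram mulmx0 mul0mx mxE.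
  move=> H; rewrite /euclid_ip -[RHS]H mxE; apply: eq_bigr => i _; by rewrite [X in _ = _ * X]mxE.
Qed.

End Sound.

Section Char2.
Variable F : fieldType.
Hypothesis two : (1 + 1 : F) = 0.

Definition beta (b : bool) : F := if b then 1 else 0.
Lemma betaD b c : beta (addb b c) = beta b + beta c.
Proof. by case: b; case: c; rewrite /= ?addr0 ?add0r ?two. Qed.
Lemma betaM b c : beta (b && c) = beta b * beta c.
Proof. by case: b; case: c; rewrite /= ?mulr1 ?mulr0 ?mul0r. Qed.

Section F4.
Variable a : F.
Hypothesis ha : a ^+ 2 + a + 1 = 0.
Definition phi4 (x : E4) : F := let: (x0, x1) := x in beta x0 + beta x1 * a.

Lemma phi4_0 : phi4 e04 = 0. Proof. by rewrite /= mul0r addr0. Qed.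
Lemma phi4_1 : phi4 e14 = 1. Proof. by rewrite /= mul0r addr0. Qed.
Lemma phi4D x y : phi4 (add4 x y) = phi4 x + phi4 y.
Proof. case: x => x0 x1; case: y => y0 y1; rewrite /= !betaD; ring. Qed.
Lemma phi4M x y : phi4 (mul4 x y) = phi4 x * phi4 y.
Proof.
case: x => x0 x1; case: y => y0 y1; rewrite /= !betaD !betaM.
set X0 := beta x0; set X1 := beta x1; set Y0 := beta y0; set Y1 := beta y1.
have -> : (X0 + X1 * a) * (Y0 + Y1 * a) =
  (X0 * Y0 + X1 * Y1) + (X0 * Y1 + X1 * Y0 + X1 * Y1) * a
  + (a ^+ 2 + a + 1) * (X1 * Y1) - (1 + 1) * ((a + 1) * (X1 * Y1)) by ring.
rewrite ha two !mul0r subr0 addr0; ring.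
Qed.
Lemma phi4_eq0 x : phi4 x = 0 -> x = e04.
Proof.
move=> H; apply/eqP/negPn/negP => nx.
have [y Hy] : exists y, mul4 x y = e14.
  by exists (inv4 x); move: nx; clear H; case: x => [[] []].
have := phi4M x y; rewrite Hy phi4_1 H mul0r => /eqP; by rewrite oner_eq0.
Qed.
End F4.

Section F8.
Variable a : F.
Hypothesis ha : a ^+ 3 + a + 1 = 0.
Definition phi8 (x : E8) : F :=
  let: (x0, x1, x2) := x in beta x0 + beta x1 * a + beta x2 * a ^+ 2.

Lemma phi8_0 : phi8 e08 = 0. Proof. by rewrite /= !mul0r !addr0. Qed.
Lemma phi8_1 : phi8 e18 = 1. Proof. by rewrite /= !mul0r !addr0. Qed.
Lemma phi8D x y : phi8 (add8 x y) = phi8 x + phi8 y.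
Proof. case: x => [[x0 x1] x2]; case: y => [[y0 y1] y2]; rewrite /= !betaD; ring. Qed.
Lemma phi8M x y : phi8 (mul8 x y) = phi8 x * phi8 y.
Proof.
case: x => [[x0 x1] x2]; case: y => [[y0 y1] y2]; rewrite /= !betaD !betaM.
set X0 := beta x0; set X1 := beta x1; set X2 := beta x2.
set Y0 := beta y0; set Y1 := beta y1; set Y2 := beta y2.
have -> : (X0 + X1 * a + X2 * a ^+ 2) * (Y0 + Y1 * a + Y2 * a ^+ 2) =
  (X0 * Y0 + X1 * Y2 + X2 * Y1)
  + (X0 * Y1 + X1 * Y0 + X1 * Y2 + X2 * Y1 + X2 * Y2) * a
  + (X0 * Y2 + X1 * Y1 + X2 * Y0 + X2 * Y2) * a ^+ 2
  + (a ^+ 3 + a + 1) * ((X1 * Y2 + X2 * Y1) + X2 * Y2 * a)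
  - (1 + 1) * ((a + 1) * ((X1 * Y2 + X2 * Y1) + X2 * Y2 * a)) by ring.
rewrite ha two !mul0r subr0 addr0; ring.
Qed.
Lemma phi8_eq0 x : phi8 x = 0 -> x = e08.
Proof.
move=> H; apply/eqP/negPn/negP => nx.
have [y Hy] : exists y, mul8 x y = e18.
  by exists (inv8 x); move: nx; clear H; case: x => [[[] []] []].
have := phi8M x y; rewrite Hy phi8_1 H mul0r => /eqP; by rewrite oner_eq0.
Qed.
End F8.
End Char2.

Lemma char2_of (F : finFieldType) m : #|F| = (2 * m)%N -> (1 + 1 : F) = 0.
Proof.
move=> hF; have := expf_card (-1 : F); rewrite hF -signr_odd oddM /= expr0 => H.
by rewrite {2}H subrr.
Qed.

Lemma other_elt (F : finFieldType) : (2 < #|F|)%N -> exists a : F, (a != 0) && (a != 1).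
Proof.
move=> hF; case: (pickP (fun a : F => (a != 0) && (a != 1))) => [a Ha | H]; first by exists a.
have : (#|F| <= 2)%N.
  rewrite -cardsT; apply: (leq_trans (subset_leq_card (B := [set (0 : F); 1]) _)).
    apply/subsetP => x _; move: (H x) => /negbT; rewrite negb_and !negbK !inE; by [].
  by rewrite cards2; case: (_ != _).
by rewrite leqNgt hF.
Qed.

Lemma root4 (F : finFieldType) : #|F| = 4%N -> exists a : F, a ^+ 2 + a + 1 = 0.
Proof.
move=> hF; have [a /andP [a0 a1]] := other_elt (ltac:(by rewrite hF) : (2 < #|F|)%N).
exists a.
have h : a * (a - 1) * (a ^+ 2 + a + 1) = 0.
  transitivity (a ^+ 4 - a); first by ring.
  by rewrite -{1}hF expf_card subrr.
by move/eqP: h; rewrite !mulf_eq0 subr_eq0 (negbTE a0) (negbTE a1) /= => /eqP.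
Qed.

Lemma root8 (F : finFieldType) : #|F| = 8%N -> exists a : F, a ^+ 3 + a + 1 = 0.
Proof.
move=> hF; have two := char2_of (m := 4) hF.
have [a /andP [a0 a1]] := other_elt (ltac:(by rewrite hF) : (2 < #|F|)%N).
have h : (a ^+ 3 + a + 1) * (a ^+ 3 + a ^+ 2 + 1) * (a - 1) * a = 0.
  transitivity (a ^+ 8 - a + (1 + 1) * (a ^+ 3 * (a - 1) * a)); first by ring.
  by rewrite two mul0r addr0 -{1}hF expf_card subrr.
move/eqP: h; rewrite !mulf_eq0 subr_eq0 (negbTE a0) (negbTE a1) !orbF => /orP [/eqP h1 | /eqP h2].
  by exists a.
exists a^-1.
have -> : a^-1 ^+ 3 + a^-1 + 1 = (a ^+ 3 + a ^+ 2 + 1) * a^-1 ^+ 3 by field.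
by rewrite h2 mul0r.
Qed.

Lemma F4_code (F : finFieldType) n k d G Js : #|F| = 4%N ->
  check_code e04 e14 add4 mul4 inv4 n k.+1 d G Js -> exists_SO_code F n k.+1 d.
Proof.
move=> hF; have two := char2_of (m := 2) hF; have [a ha] := root4 hF.
exact: (code_sound (phi4_0 a) (phi4_1 a) (phi4D two a) (phi4M two ha) (phi4_eq0 two ha)).
Qed.

Lemma F8_code (F : finFieldType) n k d G Js : #|F| = 8%N ->
  check_code e08 e18 add8 mul8 inv8 n k.+1 d G Js -> exists_SO_code F n k.+1 d.
Proof.
move=> hF; have two := char2_of (m := 4) hF; have [a ha] := root8 hF.
exact: (code_sound (phi8_0 a) (phi8_1 a) (phi8D two a) (phi8M two ha) (phi8_eq0 two ha)).
Qed.

Local Close Scope ring_scope.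

Definition G0 := map (map c4) [:: [:: 3; 0; 1; 3; 0; 1; 0; 0]; [:: 3; 2; 2; 0; 0; 0; 0; 3]].
Definition J0 : seq (seq nat) := [:: [:: 0; 2]; [:: 1; 5]; [:: 3; 7]; [:: 1; 3]; [:: 2; 7]; [:: 0; 5]; [:: 2; 5]; [:: 0; 1]].
Lemma ok0 : check_code e04 e14 add4 mul4 inv4 8 1.+1 4 G0 J0. Proof. by vm_compute. Qed.
Definition G1 := map (map c4) [:: [:: 3; 0; 3; 3; 0; 0; 0; 3]; [:: 3; 0; 3; 1; 1; 1; 0; 1]; [:: 2; 3; 1; 0; 3; 2; 2; 3]].
Definition J1 : seq (seq nat) := [:: [:: 0; 6; 7]; [:: 3; 4; 5]; [:: 1; 2; 3]; [:: 0; 1; 5]; [:: 2; 4; 7]; [:: 2; 5; 6]; [:: 0; 1; 4]; [:: 0; 2; 3]; [:: 1; 5; 7]; [:: 3; 4; 7]].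
Lemma ok1 : check_code e04 e14 add4 mul4 inv4 8 2.+1 4 G1 J1. Proof. by vm_compute. Qed.
Definition G2 := map (map c4) [:: [:: 1; 3; 3; 1; 0; 0; 0; 0]; [:: 2; 2; 3; 1; 3; 0; 3; 2]; [:: 2; 0; 2; 3; 0; 2; 3; 2]; [:: 0; 1; 1; 0; 2; 1; 1; 2]].
Definition J2 : seq (seq nat) := [:: [:: 2; 4; 5; 6]; [:: 1; 3; 5; 7]; [:: 1; 2; 3; 4]; [:: 0; 3; 4; 6]; [:: 0; 2; 3; 7]; [:: 0; 5; 6; 7]; [:: 1; 2; 6; 7]; [:: 0; 1; 4; 7]; [:: 0; 1; 2; 5]; [:: 0; 3; 4; 5]; [:: 2; 3; 5; 6]; [:: 3; 4; 6; 7]; [:: 0; 1; 3; 6]; [:: 1; 4; 5; 6]; [:: 2; 4; 5; 7]; [:: 0; 2; 4; 6]].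
Lemma ok2 : check_code e04 e14 add4 mul4 inv4 8 3.+1 4 G2 J2. Proof. by vm_compute. Qed.
Definition G3 := map (map c8) [:: [:: 2; 6; 6; 2; 0; 0; 0; 0]; [:: 2; 4; 1; 6; 6; 4; 4; 7]; [:: 4; 1; 7; 5; 1; 3; 5; 0]].
Definition J3 : seq (seq nat) := [:: [:: 2; 3; 7]; [:: 0; 1; 5]; [:: 2; 4; 6]; [:: 1; 4; 7]; [:: 0; 3; 6]; [:: 3; 4; 5]; [:: 2; 5; 7]; [:: 1; 5; 6]; [:: 0; 1; 2]; [:: 0; 4; 7]].
Lemma ok3 : check_code e08 e18 add8 mul8 inv8 8 2.+1 4 G3 J3. Proof. by vm_compute. Qed.
Definition G4 := map (map c8) [:: [:: 1; 7; 0; 0; 0; 0; 4; 2]; [:: 5; 5; 4; 1; 1; 0; 0; 4]; [:: 5; 6; 5; 5; 7; 7; 2; 1]; [:: 5; 3; 5; 7; 5; 1; 2; 2]].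
Definition J4 : seq (seq nat) := [:: [:: 3; 4; 5; 6]; [:: 0; 2; 5; 6]; [:: 0; 2; 3; 7]; [:: 1; 2; 6; 7]; [:: 1; 4; 5; 7]; [:: 1; 2; 3; 4]; [:: 0; 1; 3; 5]; [:: 0; 1; 4; 6]; [:: 0; 5; 6; 7]; [:: 0; 2; 4; 5]; [:: 2; 4; 6; 7]; [:: 0; 3; 4; 7]; [:: 2; 3; 5; 7]; [:: 1; 3; 6; 7]; [:: 1; 2; 5; 6]; [:: 0; 2; 3; 6]; [:: 0; 1; 2; 7]].
Lemma ok4 : check_code e08 e18 add8 mul8 inv8 8 3.+1 4 G4 J4. Proof. by vm_compute. Qed.
Definition G5 := map (map c8) [:: [:: 0; 5; 0; 7; 4; 3; 0; 0; 0; 5]; [:: 1; 3; 7; 7; 0; 6; 5; 2; 4; 7]; [:: 6; 3; 6; 0; 6; 0; 0; 5; 2; 2]; [:: 0; 0; 2; 2; 2; 4; 4; 6; 6; 2]].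
Definition J5 : seq (seq nat) := [:: [:: 0; 5; 7; 9]; [:: 0; 1; 3; 4]; [:: 2; 4; 6; 9]; [:: 1; 5; 6; 8]; [:: 2; 3; 7; 8]; [:: 1; 2; 5; 7]; [:: 0; 3; 8; 9]; [:: 4; 6; 7; 8]; [:: 3; 5; 6; 9]; [:: 0; 2; 4; 5]; [:: 1; 4; 8; 9]; [:: 0; 3; 6; 7]; [:: 0; 1; 2; 6]; [:: 1; 2; 3; 9]; [:: 3; 4; 5; 8]; [:: 2; 7; 8; 9]; [:: 1; 4; 6; 7]; [:: 0; 2; 5; 8]; [:: 0; 1; 7; 8]; [:: 2; 3; 4; 6]; [:: 3; 4; 7; 9]; [:: 0; 4; 5; 6]; [:: 1; 3; 8; 9]; [:: 1; 4; 7; 9]].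
Lemma ok5 : check_code e08 e18 add8 mul8 inv8 10 3.+1 5 G5 J5. Proof. by vm_compute. Qed.
Definition G6 := map (map c8) [:: [:: 0; 5; 2; 0; 0; 0; 4; 0; 3; 0]; [:: 0; 1; 0; 7; 6; 5; 6; 2; 0; 1]; [:: 2; 0; 6; 4; 1; 4; 1; 2; 1; 7]; [:: 5; 0; 4; 3; 3; 6; 6; 6; 2; 5]; [:: 1; 6; 7; 3; 3; 7; 2; 7; 3; 1]].
Definition J6 : seq (seq nat) := [:: [:: 0; 1; 4; 5; 9]; [:: 2; 3; 6; 7; 9]; [:: 0; 5; 6; 7; 8]; [:: 0; 1; 2; 3; 8]; [:: 1; 2; 4; 5; 6]; [:: 3; 4; 7; 8; 9]; [:: 2; 4; 6; 8; 9]; [:: 0; 2; 4; 5; 7]; [:: 0; 3; 5; 6; 9]; [:: 1; 2; 5; 8; 9]; [:: 0; 1; 3; 4; 6]; [:: 1; 3; 5; 7; 8]; [:: 0; 1; 2; 7; 9]; [:: 1; 4; 6; 7; 8]; [:: 0; 2; 3; 5; 8]; [:: 1; 3; 4; 5; 9]; [:: 0; 2; 3; 6; 7]; [:: 2; 4; 5; 6; 8]; [:: 0; 6; 7; 8; 9]].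
Lemma ok6 : check_code e08 e18 add8 mul8 inv8 10 4.+1 4 G6 J6. Proof. by vm_compute. Qed.
Definition G7 := map (map c8) [:: [:: 3; 5; 0; 6; 1; 0; 0; 0; 0; 6; 7; 0]; [:: 4; 6; 2; 1; 5; 4; 6; 5; 5; 0; 1; 7]; [:: 5; 5; 3; 7; 5; 4; 6; 5; 7; 1; 6; 6]; [:: 3; 7; 2; 5; 3; 0; 4; 3; 7; 6; 4; 2]].
Definition J7 : seq (seq nat) := [:: [:: 1; 7; 9; 11]; [:: 2; 3; 6; 10]; [:: 0; 4; 5; 9]; [:: 0; 1; 8; 10]; [:: 3; 5; 8; 11]; [:: 4; 6; 7; 8]; [:: 0; 2; 7; 11]; [:: 1; 2; 4; 5]; [:: 0; 3; 6; 9]; [:: 3; 4; 7; 10]; [:: 2; 8; 9; 10]; [:: 5; 6; 10; 11]; [:: 0; 1; 2; 9]; [:: 1; 3; 5; 7]; [:: 1; 4; 6; 11]; [:: 2; 3; 4; 8]; [:: 5; 6; 8; 9]; [:: 4; 9; 10; 11]; [:: 0; 5; 7; 10]; [:: 1; 3; 6; 8]; [:: 2; 4; 6; 7]; [:: 7; 8; 10; 11]; [:: 3; 5; 9; 11]; [:: 0; 3; 4; 11]; [:: 0; 5; 6; 8]; [:: 1; 4; 9; 10]; [:: 1; 2; 5; 6]; [:: 2; 4; 8; 11]; [:: 0; 1; 3; 10]; [:: 0; 5; 7; 8]; [:: 4; 7; 8; 9]; [:: 3; 7; 8; 11]].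
Lemma ok7 : check_code e08 e18 add8 mul8 inv8 12 3.+1 6 G7 J7. Proof. by vm_compute. Qed.
Definition G8 := map (map c8) [:: [:: 0; 0; 0; 3; 0; 2; 6; 6; 0; 2; 3; 0]; [:: 7; 0; 2; 1; 5; 6; 0; 5; 6; 3; 6; 1]; [:: 3; 2; 4; 4; 1; 4; 2; 1; 2; 0; 3; 6]; [:: 2; 7; 7; 5; 0; 0; 1; 7; 5; 1; 5; 0]; [:: 7; 5; 2; 3; 5; 2; 0; 7; 2; 6; 7; 0]].
Definition J8 : seq (seq nat) := [:: [:: 0; 2; 5; 9; 11]; [:: 0; 1; 3; 8; 10]; [:: 0; 4; 7; 10; 11]; [:: 0; 1; 6; 7; 9]; [:: 3; 4; 6; 9; 10]; [:: 2; 3; 4; 5; 7]; [:: 2; 6; 8; 10; 11]; [:: 1; 5; 7; 8; 11]; [:: 0; 4; 5; 6; 8]; [:: 1; 2; 4; 8; 9]; [:: 3; 7; 8; 9; 11]; [:: 1; 3; 4; 6; 11]; [:: 1; 2; 5; 6; 10]; [:: 5; 7; 8; 9; 10]; [:: 0; 2; 3; 6; 7]; [:: 1; 3; 9; 10; 11]; [:: 1; 2; 4; 7; 10]; [:: 0; 3; 5; 6; 11]; [:: 0; 1; 4; 5; 9]; [:: 4; 5; 8; 10; 11]; [:: 2; 3; 5; 8; 9]; [:: 4; 5; 6; 7; 9]; [:: 0; 1; 2; 7; 11]; [:: 3; 5; 6; 7; 10]; [:: 2; 6; 7; 9; 11]; [:: 0; 2; 3; 4; 10]; [:: 0; 6;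 8; 9; 10]; [:: 1; 3; 6; 7; 8]; [:: 0; 3; 4; 8; 11]; [:: 0; 1; 2; 5; 8]; [:: 0; 4; 7; 8; 9]; [:: 2; 4; 5; 6; 11]; [:: 0; 2; 5; 7; 10]; [:: 1; 2; 3; 6; 9]; [:: 1; 3; 4; 5; 10]; [:: 0; 1; 6; 10; 11]; [:: 2; 3; 7; 10; 11]; [:: 2; 7; 8; 9; 10]; [:: 1; 5; 6; 8; 9]; [:: 1; 3; 5; 7; 9]; [:: 0; 2; 4; 6; 9]; [:: 1; 4; 6; 7; 8]; [:: 1; 4; 9; 10; 11]; [:: 0; 1; 3; 4; 7]; [:: 0; 1; 8; 9; 11]; [:: 2; 4; 6; 8; 10]; [:: 0; 3; 5; 10; 11]; [:: 2; 3; 4; 9; 11]; [:: 1; 2; 3; 8; 11]; [:: 0; 5; 6; 7; 8]; [:: 3; 6; 7; 8; 11]; [:: 5; 6; 9; 10; 11]; [:: 0; 4; 5; 7; 10]; [:: 0; 1; 2; 4; 5]; [:: 2; 4; 5; 7; 11]; [:: 3; 4; 5; 9; 11]; [:: 3; 4; 7; 8; 10]; [:: 1; 5; 7; 10; 11]; [:: 0; 2; 4; 6; 8]; [:: 0; 2; 3; 8; 11]; [:: 6; 7; 9; 10; 11]; [:: 0; 2; 3; 5; 10]; [:: 0; 2; 4; 8; 10]; [:: 1; 2; 3; 7; 10]; [:: 3; 4; 6; 7; 9]; [:: 1; 3; 5; 6; 10]; [:: 1; 3; 4; 6; 8]; [:: 1; 5; 6; 7; 11]; [:: 0; 1; 2;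 7; 8]; [:: 0; 2; 6; 10; 11]; [:: 1; 2; 5; 10; 11]; [:: 0; 4; 5; 8; 10]].
Lemma ok8 : check_code e08 e18 add8 mul8 inv8 12 4.+1 6 G8 J8. Proof. by vm_compute. Qed.
Definition G9 := map (map c8) [:: [:: 0; 0; 5; 0; 7; 1; 2; 0; 0; 0; 1; 0]; [:: 4; 1; 6; 3; 7; 5; 7; 5; 1; 6; 0; 7]; [:: 6; 1; 3; 4; 6; 7; 5; 1; 2; 6; 6; 7]; [:: 7; 3; 5; 0; 2; 5; 2; 5; 2; 3; 3; 3]; [:: 0; 2; 7; 0; 7; 1; 2; 1; 1; 6; 0; 7]; [:: 1; 3; 7; 2; 5; 2; 2; 5; 5; 4; 6; 0]].
Definition J9 : seq (seq nat) := [:: [:: 0; 3; 4; 5; 10; 11]; [:: 1; 3; 7; 8; 9; 10]; [:: 0; 1; 3; 4; 6; 9]; [:: 1; 2; 4; 5; 9; 10]; [:: 0; 2; 6; 7; 8; 11]; [:: 4; 5; 6; 7; 8; 9]; [:: 1; 4; 6; 8; 10; 11]; [:: 2; 3; 5; 6; 9; 11]; [:: 0; 1; 5; 8; 9; 11]; [:: 2; 3; 4; 6; 7; 10]; [:: 0; 1; 2; 3; 5; 7]; [:: 0; 2; 7; 9; 10; 11]; [:: 0; 2; 6; 8; 9; 10]; [:: 1; 2; 3; 4; 8; 11]; [:: 0; 1; 5; 6; 7; 10]; [:: 3; 5; 7; 8; 10; 11]; [:: 0; 3; 4; 5; 6; 8]; [:: 1; 4; 5; 7; 9; 11]; [:: 1;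 2; 3; 6; 10; 11]; [:: 0; 1; 2; 4; 7; 8]; [:: 0; 3; 4; 7; 8; 11]; [:: 0; 2; 4; 5; 6; 11]; [:: 1; 3; 5; 6; 9; 10]; [:: 4; 6; 7; 9; 10; 11]; [:: 1; 2; 6; 7; 8; 9]; [:: 0; 3; 5; 6; 7; 9]; [:: 0; 2; 3; 5; 8; 10]; [:: 2; 3; 4; 8; 9; 10]; [:: 1; 2; 5; 7; 10; 11]; [:: 0; 4; 5; 7; 8; 10]; [:: 2; 3; 4; 7; 9; 11]; [:: 5; 6; 8; 9; 10; 11]; [:: 0; 1; 3; 9; 10; 11]; [:: 1; 2; 4; 5; 6; 8]; [:: 1; 3; 5; 6; 7; 11]; [:: 0; 1; 2; 6; 9; 11]; [:: 1; 3; 4; 5; 8; 9]; [:: 0; 2; 3; 4; 6; 10]; [:: 0; 1; 3; 4; 7; 10]; [:: 0; 1; 6; 7; 8; 11]; [:: 2; 4; 5; 8; 10; 11]; [:: 0; 2; 4; 5; 7; 9]; [:: 3; 6; 7; 8; 9; 10]; [:: 0; 1; 2; 6; 7; 10]; [:: 0; 2; 3; 8; 9; 11]; [:: 0; 1; 4; 8; 9; 10]; [:: 1; 2; 3; 7; 8; 10]; [:: 0; 1; 5; 6; 8; 11]; [:: 1; 2; 3; 5; 8; 9]; [:: 1; 3; 4; 6; 7; 9]; [:: 2; 3; 4; 6; 7; 11]; [:: 0; 3; 4; 6; 8; 9]; [:: 1; 2; 7; 8; 9; 10]; [:: 0; 1; 4; 5; 9; 11]; [:: 1; 3; 4; 6;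 7; 10]; [:: 0; 2; 3; 5; 6; 11]].
Lemma ok9 : check_code e08 e18 add8 mul8 inv8 12 5.+1 5 G9 J9. Proof. by vm_compute. Qed.
Definition G10 := map (map c8) [:: [:: 4; 0; 7; 3; 0; 0; 0; 0; 5; 1; 3; 0; 7; 0]; [:: 6; 6; 0; 5; 5; 5; 6; 3; 4; 3; 5; 6; 6; 2]; [:: 5; 1; 3; 0; 6; 5; 3; 3; 1; 5; 6; 3; 4; 1]; [:: 3; 5; 1; 5; 6; 0; 5; 1; 6; 2; 1; 2; 5; 2]; [:: 5; 7; 3; 6; 4; 6; 6; 5; 4; 3; 3; 2; 2; 2]].
Definition J10 : seq (seq nat) := [:: [:: 4; 6; 7; 9; 12]; [:: 1; 2; 4; 8; 10]; [:: 0; 5; 6; 11; 13]; [:: 0; 1; 2; 3; 7]; [:: 3; 9; 10; 11; 13]; [:: 1; 5; 8; 11; 12]; [:: 0; 5; 9; 10; 12]; [:: 3; 4; 5; 7; 8]; [:: 2; 6; 8; 12; 13]; [:: 0; 1; 4; 9; 13]; [:: 1; 6; 7; 10; 11]; [:: 2; 3; 5; 6; 9]; [:: 0; 3; 4; 11; 12]; [:: 2; 7; 8; 9; 11]; [:: 2; 5; 7; 10; 13]; [:: 0; 3; 6; 8; 10]; [:: 1; 3; 5; 12; 13]; [:: 2; 4; 10; 11; 12]; [:: 0; 1; 6; 8; 9]; [:: 0; 7; 10; 12; 13]; [:: 1; 3; 4; 6; 13]; [:: 4; 7; 8; 11; 13]; [:: 0; 2; 4; 5; 6]; [:: 1; 3;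 9; 10; 12]; [:: 5; 8; 9; 10; 13]; [:: 1; 2; 9; 11; 13]; [:: 3; 6; 7; 11; 12]; [:: 0; 2; 3; 4; 9]; [:: 3; 5; 8; 11; 13]; [:: 1; 2; 5; 7; 12]; [:: 0; 5; 7; 9; 11]; [:: 4; 5; 6; 10; 12]; [:: 0; 2; 8; 11; 12]; [:: 4; 6; 8; 9; 11]; [:: 0; 1; 4; 10; 11]; [:: 0; 6; 7; 9; 13]; [:: 1; 7; 8; 9; 13]; [:: 2; 3; 5; 10; 11]; [:: 0; 4; 8; 12; 13]; [:: 4; 5; 7; 9; 10]; [:: 2; 3; 4; 7; 13]; [:: 0; 2; 6; 10; 12]; [:: 3; 7; 8; 9; 10]; [:: 0; 1; 4; 6; 7]; [:: 0; 1; 3; 5; 8]; [:: 1; 10; 11; 12; 13]; [:: 0; 2; 4; 11; 13]; [:: 1; 2; 3; 6; 8]; [:: 5; 6; 7; 8; 12]; [:: 2; 5; 9; 12; 13]; [:: 0; 2; 7; 8; 10]; [:: 1; 2; 5; 6; 11]; [:: 1; 3; 4; 9; 11]; [:: 0; 1; 5; 10; 13]; [:: 1; 4; 7; 8; 12]; [:: 3; 6; 9; 12; 13]; [:: 2; 3; 8; 10; 13]; [:: 2; 6; 9; 10; 11]; [:: 1; 3; 5; 6; 9]; [:: 0; 3; 7; 8; 12]; [:: 1; 2; 6; 9; 10]; [:: 0; 3; 4; 5; 10]; [:: 0; 1; 2; 9; 12]; [:: 4; 6; 8; 10; 11]; [:: 1; 7; 11; 12; 13]; [:: 3; 4; 5;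 9; 12]; [:: 2; 4; 8; 9; 13]; [:: 0; 2; 3; 7; 11]; [:: 2; 5; 6; 7; 13]; [:: 6; 7; 10; 12; 13]; [:: 0; 1; 8; 11; 13]; [:: 0; 4; 5; 7; 8]; [:: 3; 4; 5; 7; 13]; [:: 1; 3; 7; 10; 12]; [:: 0; 8; 9; 11; 12]; [:: 0; 2; 8; 9; 11]; [:: 1; 4; 6; 9; 13]; [:: 3; 5; 6; 11; 12]; [:: 0; 3; 6; 10; 11]; [:: 1; 2; 4; 10; 13]; [:: 4; 5; 6; 8; 9]; [:: 2; 3; 4; 6; 10]; [:: 1; 5; 6; 10; 13]; [:: 1; 3; 4; 8; 13]; [:: 0; 6; 11; 12; 13]; [:: 0; 2; 3; 5; 13]; [:: 0; 1; 5; 9; 11]].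
Lemma ok10 : check_code e08 e18 add8 mul8 inv8 14 4.+1 7 G10 J10. Proof. by vm_compute. Qed.
Definition G11 := map (map c8) [:: [:: 0; 2; 4; 0; 0; 0; 0; 7; 5; 3; 0; 0; 0; 7]; [:: 7; 4; 5; 2; 0; 5; 2; 3; 3; 7; 7; 0; 1; 2]; [:: 4; 4; 0; 7; 2; 3; 5; 2; 4; 5; 1; 6; 7; 0]; [:: 7; 5; 2; 6; 7; 3; 3; 3; 0; 4; 0; 4; 3; 1]; [:: 7; 0; 6; 3; 6; 1; 1; 6; 5; 1; 7; 7; 4; 2]; [:: 0; 7; 3; 7; 5; 6; 0; 5; 5; 6; 6; 6; 5; 3]].
Definition J11 : seq (seq nat) := [:: [:: 1; 2; 4; 5; 8; 13]; [:: 1; 4; 6; 10; 11; 12]; [:: 3; 5; 7; 10; 12; 13]; [:: 0; 3; 8; 9; 11; 12]; [:: 0; 2; 5; 6; 9; 10]; [:: 3; 4; 6; 7; 9; 13]; [:: 0; 1; 2; 7; 11; 13]; [:: 2; 6; 7; 8; 9; 12]; [:: 2; 3; 4; 8; 10; 11]; [:: 0; 1; 3; 5; 6; 8]; [:: 1; 4; 5; 7; 9; 11]; [:: 0; 1; 9; 10; 12; 13]; [:: 0; 2; 4; 5; 7; 12]; [:: 5; 6; 8; 11; 12; 13]; [:: 0; 4; 7; 8; 10; 13]; [:: 1; 2; 3; 7; 9; 10]; [:: 2; 4; 9; 11; 12; 13]; [:: 2; 3; 5; 6; 7; 11]; [:: 0; 2; 3; 4; 6; 13]; [:: 1; 3;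 8; 10; 11; 13]; [:: 0; 6; 7; 9; 10; 11]; [:: 3; 4; 5; 8; 9; 10]; [:: 0; 1; 4; 6; 8; 9]; [:: 0; 1; 3; 4; 7; 12]; [:: 1; 2; 5; 8; 10; 12]; [:: 1; 5; 6; 7; 10; 13]; [:: 1; 3; 5; 9; 11; 12]; [:: 2; 3; 6; 10; 12; 13]; [:: 0; 2; 5; 8; 9; 13]; [:: 0; 5; 7; 8; 10; 11]; [:: 3; 4; 6; 7; 8; 12]; [:: 0; 3; 4; 5; 10; 13]; [:: 1; 2; 3; 6; 9; 13]; [:: 4; 7; 8; 9; 12; 13]; [:: 2; 7; 8; 9; 11; 13]; [:: 0; 2; 6; 8; 11; 12]; [:: 0; 1; 6; 7; 12; 13]; [:: 1; 2; 3; 4; 5; 12]; [:: 2; 4; 5; 6; 10; 11]; [:: 0; 5; 6; 9; 11; 13]; [:: 5; 6; 7; 9; 10; 12]; [:: 0; 2; 4; 9; 10; 12]; [:: 0; 1; 2; 3; 7; 8]; [:: 0; 3; 4; 7; 11; 13]; [:: 4; 6; 8; 10; 12; 13]; [:: 1; 6; 8; 9; 10; 11]; [:: 1; 2; 6; 7; 11; 12]; [:: 0; 1; 4; 5; 8; 11]; [:: 1; 2; 4; 6; 7; 10]; [:: 0; 3; 4; 5; 6; 9]; [:: 0; 3; 6; 7; 8; 10]; [:: 0; 1; 2; 10; 11; 13]; [:: 1; 3; 4; 8; 12; 13]; [:: 2; 3; 5; 8; 11; 12]; [:: 0; 3; 5; 7; 9; 13]; [:: 0; 2; 7; 10; 11;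 12]; [:: 1; 2; 3; 4; 9; 11]; [:: 1; 4; 7; 10; 11; 12]; [:: 3; 5; 6; 8; 9; 13]; [:: 1; 4; 5; 6; 12; 13]; [:: 2; 4; 5; 7; 10; 11]; [:: 0; 1; 7; 8; 9; 11]; [:: 5; 9; 10; 11; 12; 13]; [:: 4; 5; 6; 7; 8; 11]; [:: 0; 1; 3; 6; 10; 12]; [:: 3; 6; 7; 9; 11; 12]; [:: 1; 3; 5; 7; 8; 12]; [:: 0; 4; 5; 7; 10; 12]; [:: 0; 2; 3; 8; 9; 10]; [:: 1; 2; 4; 5; 6; 9]; [:: 3; 4; 6; 9; 10; 11]; [:: 2; 6; 7; 8; 10; 13]; [:: 0; 2; 3; 5; 6; 12]; [:: 1; 4; 5; 7; 9; 10]; [:: 0; 4; 8; 10; 11; 12]; [:: 0; 2; 3; 4; 7; 8]; [:: 3; 6; 8; 9; 10; 12]; [:: 2; 3; 6; 8; 11; 13]; [:: 0; 2; 6; 8; 9; 13]; [:: 0; 1; 4; 11; 12; 13]; [:: 1; 3; 4; 7; 10; 11]].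
Lemma ok11 : check_code e08 e18 add8 mul8 inv8 14 5.+1 6 G11 J11. Proof. by vm_compute. Qed.
Definition G12 := map (map c8) [:: [:: 0; 0; 6; 0; 6; 6; 0; 5; 0; 4; 0; 7; 0; 0]; [:: 7; 6; 3; 6; 7; 3; 4; 0; 1; 2; 7; 1; 5; 4]; [:: 2; 4; 0; 4; 4; 2; 1; 2; 7; 0; 7; 7; 5; 5]; [:: 7; 1; 1; 2; 4; 0; 3; 4; 1; 7; 4; 0; 4; 0]; [:: 3; 3; 7; 3; 3; 6; 1; 1; 5; 7; 1; 7; 5; 0]; [:: 6; 6; 3; 0; 4; 1; 3; 2; 0; 1; 0; 1; 4; 3]; [:: 2; 3; 1; 3; 5; 7; 3; 2; 2; 3; 3; 1; 5; 6]].
Definition J12 : seq (seq nat) := [:: [:: 0; 4; 7; 8; 9; 10; 13]; [:: 1; 2; 3; 7; 9; 10; 13]; [:: 2; 3; 6; 8; 9; 11; 12]; [:: 0; 1; 2; 5; 6; 8; 13]; [:: 1; 4; 7; 8; 9; 11; 12]; [:: 0; 3; 5; 6; 8; 10; 12]; [:: 0; 1; 3; 6; 9; 12; 13]; [:: 0; 1; 3; 4; 5; 8; 9]; [:: 2; 5; 7; 8; 10; 11; 13]; [:: 3; 4; 5; 9; 11; 12; 13]; [:: 1; 2; 4; 5; 9; 10; 12]; [:: 0; 1; 5; 7; 9; 10; 11]; [:: 0; 1; 2; 3; 4; 10; 11]; [:: 1; 2; 3; 4; 6; 7; 8]; [:: 1; 5; 6; 7; 11; 12; 13]; [:: 3;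 4; 5; 6; 7; 10; 11]; [:: 0; 2; 3; 5; 7; 9; 12]; [:: 0; 1; 4; 6; 7; 10; 12]; [:: 1; 4; 6; 8; 10; 11; 13]; [:: 0; 2; 6; 9; 10; 11; 13]; [:: 0; 2; 4; 5; 8; 11; 12]; [:: 3; 5; 6; 7; 8; 9; 13]; [:: 0; 3; 7; 10; 11; 12; 13]; [:: 0; 2; 3; 4; 5; 7; 13]; [:: 0; 1; 2; 7; 8; 10; 12]; [:: 1; 2; 4; 5; 6; 9; 11]; [:: 0; 3; 4; 6; 7; 9; 11]; [:: 2; 4; 6; 7; 10; 12; 13]; [:: 1; 5; 8; 9; 10; 12; 13]; [:: 1; 2; 3; 4; 8; 12; 13]; [:: 2; 3; 4; 5; 8; 9; 10]; [:: 0; 1; 2; 8; 9; 11; 13]; [:: 1; 3; 5; 8; 10; 11; 12]; [:: 0; 4; 5; 6; 9; 12; 13]; [:: 2; 3; 5; 6; 10; 12; 13]; [:: 0; 5; 6; 8; 9; 10; 11]; [:: 1; 3; 6; 7; 8; 9; 10]; [:: 0; 1; 3; 5; 6; 11; 12]; [:: 1; 3; 4; 5; 7; 10; 13]; [:: 0; 2; 6; 7; 8; 12; 13]; [:: 1; 2; 6; 9; 10; 11; 12]; [:: 2; 4; 7; 9; 11; 12; 13]; [:: 1; 2; 3; 6; 7; 11; 13]; [:: 0; 2; 4; 6; 8; 10; 12]; [:: 0; 1; 4; 10; 11; 12; 13]; [:: 1; 2; 5; 6; 7; 8; 12]; [:: 3; 4; 8; 9; 10; 11; 13]; [:: 0;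 2; 3; 7; 8; 9; 11]; [:: 4; 5; 6; 7; 9; 10; 12]; [:: 0; 2; 3; 5; 6; 7; 10]; [:: 3; 4; 5; 7; 8; 12; 13]; [:: 0; 1; 3; 5; 9; 11; 13]; [:: 0; 1; 4; 6; 7; 8; 11]; [:: 1; 3; 4; 6; 9; 10; 13]; [:: 0; 1; 2; 5; 7; 12; 13]; [:: 2; 4; 5; 6; 8; 9; 13]; [:: 0; 5; 7; 8; 9; 11; 12]; [:: 0; 3; 6; 8; 10; 11; 13]; [:: 1; 2; 3; 4; 5; 6; 12]; [:: 2; 3; 7; 8; 10; 11; 12]; [:: 0; 1; 3; 4; 7; 9; 12]; [:: 3; 6; 7; 9; 10; 11; 12]; [:: 1; 2; 3; 5; 8; 11; 13]; [:: 0; 2; 3; 9; 10; 12; 13]; [:: 0; 1; 2; 4; 5; 8; 10]; [:: 0; 1; 3; 7; 8; 10; 13]; [:: 1; 2; 4; 6; 7; 9; 10]; [:: 0; 2; 3; 4; 5; 6; 11]; [:: 3; 4; 6; 8; 11; 12; 13]; [:: 0; 2; 5; 6; 7; 11; 13]; [:: 0; 1; 5; 6; 7; 8; 9]; [:: 0; 1; 6; 8; 9; 11; 12]; [:: 2; 4; 5; 10; 11; 12; 13]; [:: 1; 4; 5; 7; 9; 11; 13]; [:: 6; 7; 8; 9; 10; 12; 13]; [:: 0; 3; 4; 9; 10; 11; 12]; [:: 0; 1; 2; 4; 6; 10; 13]; [:: 0; 1; 2; 3; 7; 11; 12]; [:: 0; 4; 5; 8; 10; 11; 13]; [:: 4;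 5; 6; 7; 8; 11; 12]; [:: 1; 2; 3; 6; 8; 9; 10]; [:: 2; 3; 5; 9; 10; 11; 13]; [:: 0; 2; 4; 6; 7; 8; 9]; [:: 0; 1; 4; 5; 8; 12; 13]; [:: 0; 3; 4; 6; 7; 12; 13]; [:: 0; 4; 5; 7; 9; 10; 13]; [:: 1; 5; 6; 7; 8; 10; 11]; [:: 0; 1; 2; 3; 5; 9; 10]; [:: 0; 2; 3; 5; 8; 12; 13]; [:: 2; 5; 7; 9; 10; 11; 12]; [:: 1; 2; 5; 7; 8; 9; 13]; [:: 1; 3; 7; 8; 11; 12; 13]; [:: 1; 2; 8; 10; 11; 12; 13]; [:: 2; 3; 4; 7; 8; 11; 13]; [:: 1; 3; 4; 6; 8; 10; 12]; [:: 1; 2; 6; 7; 9; 12; 13]; [:: 1; 2; 4; 6; 11; 12; 13]; [:: 0; 3; 4; 5; 7; 8; 10]; [:: 1; 2; 4; 5; 7; 10; 11]; [:: 0; 5; 6; 10; 11; 12; 13]; [:: 2; 3; 5; 6; 7; 9; 11]; [:: 5; 6; 8; 9; 11; 12; 13]; [:: 0; 2; 3; 4; 8; 9; 13]; [:: 0; 2; 5; 8; 9; 10; 12]; [:: 3; 4; 5; 6; 8; 9; 12]; [:: 0; 1; 3; 5; 6; 7; 13]; [:: 0; 1; 2; 3; 6; 8; 11]; [:: 2; 4; 6; 7; 9; 10; 11]; [:: 3; 5; 7; 8; 9; 10; 12]; [:: 0; 1; 4; 5; 6; 10; 11]; [:: 1; 2; 3; 4; 5; 7; 12]; [:: 0;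 1; 7; 9; 10; 11; 13]; [:: 4; 5; 6; 7; 8; 10; 13]; [:: 0; 1; 2; 3; 4; 9; 12]; [:: 0; 4; 7; 8; 10; 11; 12]; [:: 1; 3; 6; 8; 9; 11; 13]; [:: 0; 4; 8; 9; 10; 12; 13]; [:: 0; 3; 5; 6; 9; 10; 13]; [:: 0; 1; 2; 4; 7; 9; 12]; [:: 2; 3; 4; 7; 9; 10; 12]; [:: 1; 2; 3; 7; 10; 12; 13]; [:: 1; 3; 5; 6; 9; 10; 12]; [:: 1; 2; 5; 9; 11; 12; 13]; [:: 0; 1; 2; 4; 7; 8; 11]; [:: 0; 2; 6; 7; 10; 11; 12]; [:: 1; 3; 7; 8; 9; 10; 11]; [:: 2; 4; 5; 6; 8; 10; 11]; [:: 0; 1; 2; 6; 7; 9; 10]; [:: 0; 4; 7; 8; 9; 11; 13]; [:: 1; 4; 6; 7; 9; 11; 12]; [:: 1; 4; 6; 7; 8; 9; 13]; [:: 2; 3; 5; 8; 9; 11; 12]; [:: 2; 3; 6; 7; 8; 9; 13]; [:: 0; 2; 3; 6; 7; 8; 12]; [:: 0; 1; 3; 5; 10; 12; 13]; [:: 2; 4; 7; 8; 10; 12; 13]; [:: 0; 2; 3; 4; 7; 9; 10]; [:: 1; 3; 4; 9; 10; 11; 12]; [:: 2; 3; 4; 5; 6; 7; 13]; [:: 0; 1; 4; 5; 6; 8; 13]; [:: 0; 1; 3; 8; 9; 12; 13]; [:: 1; 2; 6; 8; 9; 10; 13]; [:: 2; 3; 6; 9; 11; 12; 13]; [:: 0;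 3; 4; 5; 7; 11; 12]; [:: 0; 1; 4; 5; 8; 9; 12]; [:: 0; 2; 4; 6; 8; 10; 11]; [:: 4; 5; 6; 9; 10; 11; 12]; [:: 1; 3; 6; 7; 10; 11; 12]; [:: 1; 3; 5; 6; 7; 8; 12]; [:: 3; 4; 5; 6; 8; 9; 11]; [:: 0; 1; 2; 4; 6; 7; 13]; [:: 0; 2; 3; 10; 11; 12; 13]; [:: 0; 1; 6; 7; 10; 12; 13]; [:: 1; 3; 5; 7; 10; 11; 13]; [:: 0; 1; 2; 3; 4; 5; 9]; [:: 1; 2; 4; 5; 8; 11; 13]; [:: 0; 5; 7; 8; 9; 10; 13]; [:: 3; 5; 6; 8; 11; 12; 13]; [:: 0; 3; 4; 6; 7; 11; 13]; [:: 2; 4; 5; 6; 8; 10; 13]; [:: 0; 1; 2; 5; 6; 9; 12]; [:: 0; 1; 2; 8; 10; 11; 12]; [:: 0; 2; 7; 9; 10; 12; 13]; [:: 0; 1; 2; 4; 5; 11; 12]; [:: 0; 1; 2; 3; 6; 11; 13]; [:: 0; 2; 5; 7; 8; 10; 11]; [:: 0; 2; 4; 6; 8; 9; 13]; [:: 4; 7; 9; 10; 11; 12; 13]; [:: 0; 3; 5; 6; 9; 11; 12]; [:: 0; 3; 4; 6; 8; 9; 10]; [:: 1; 2; 4; 5; 10; 11; 13]; [:: 0; 5; 8; 10; 11; 12; 13]; [:: 1; 2; 7; 8; 10; 11; 13]; [:: 2; 3; 4; 5; 6; 10; 12]; [:: 0; 3; 6; 8; 9; 11; 13]; [:: 1;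 4; 7; 8; 10; 12; 13]; [:: 4; 6; 8; 9; 10; 12; 13]; [:: 1; 3; 4; 5; 6; 7; 13]; [:: 0; 2; 3; 4; 7; 8; 13]; [:: 1; 3; 4; 5; 7; 8; 9]; [:: 1; 2; 6; 7; 8; 11; 12]; [:: 0; 1; 2; 3; 6; 8; 12]; [:: 3; 4; 5; 10; 11; 12; 13]; [:: 1; 2; 3; 5; 7; 8; 13]; [:: 1; 2; 5; 7; 10; 11; 13]; [:: 0; 1; 5; 6; 7; 9; 10]; [:: 1; 3; 4; 7; 9; 11; 13]; [:: 1; 5; 6; 8; 9; 12; 13]; [:: 2; 4; 5; 6; 7; 11; 12]; [:: 0; 1; 3; 4; 8; 11; 13]; [:: 0; 2; 4; 7; 8; 9; 13]].
Lemma ok12 : check_code e08 e18 add8 mul8 inv8 14 6.+1 6 G12 J12. Proof. by vm_compute. Qed.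
Definition G13 := map (map c8) [:: [:: 2; 3; 0; 0; 0; 0; 0; 7; 0; 3; 7; 6; 3; 7; 0; 0]; [:: 2; 4; 2; 6; 0; 6; 7; 0; 2; 3; 7; 1; 4; 6; 3; 5]; [:: 0; 5; 2; 1; 3; 3; 7; 1; 2; 7; 5; 6; 6; 6; 0; 6]; [:: 4; 5; 3; 7; 2; 6; 2; 0; 4; 6; 6; 1; 3; 4; 7; 6]; [:: 6; 4; 3; 0; 4; 1; 1; 5; 2; 4; 0; 1; 5; 7; 4; 1]].
Definition J13 : seq (seq nat) := [:: [:: 0; 7; 8; 9; 10]; [:: 3; 4; 6; 13; 15]; [:: 1; 2; 5; 11; 12]; [:: 4; 5; 7; 12; 14]; [:: 9; 10; 11; 13; 14]; [:: 1; 2; 3; 8; 14]; [:: 0; 5; 6; 9; 15]; [:: 2; 4; 6; 7; 11]; [:: 0; 3; 8; 12; 13]; [:: 0; 1; 4; 10; 15]; [:: 7; 8; 11; 13; 15]; [:: 1; 3; 5; 6; 10]; [:: 2; 10; 12; 14; 15]; [:: 4; 6; 8; 9; 12]; [:: 1; 2; 7; 9; 13]; [:: 0; 3; 7; 11; 14]; [:: 2; 4; 5; 10; 13]; [:: 0; 1; 6; 13; 14]; [:: 5; 6; 8; 11; 14]; [:: 0; 2; 3; 4; 9]; [:: 1; 6; 7; 12; 15]; [:: 3; 9; 10; 11; 15]; [:: 2; 3; 5; 7; 15]; [:: 0; 1; 4; 8; 11]; [:: 1; 5; 9; 14; 15]; [:: 3; 5; 9; 12; 13]; [:: 0; 2;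 6; 8; 10]; [:: 1; 8; 10; 12; 13]; [:: 0; 4; 11; 12; 13]; [:: 3; 4; 7; 10; 14]; [:: 2; 6; 9; 12; 14]; [:: 0; 5; 8; 12; 15]; [:: 3; 6; 10; 11; 12]; [:: 2; 4; 8; 9; 15]; [:: 0; 5; 7; 10; 13]; [:: 1; 3; 7; 8; 9]; [:: 0; 2; 5; 11; 14]; [:: 1; 4; 6; 9; 11]; [:: 4; 8; 13; 14; 15]; [:: 2; 3; 8; 11; 13]; [:: 6; 7; 9; 10; 15]; [:: 1; 11; 12; 14; 15]; [:: 0; 1; 3; 7; 12]; [:: 4; 5; 8; 10; 11]; [:: 5; 6; 7; 13; 14]; [:: 1; 2; 7; 10; 11]; [:: 0; 5; 8; 9; 13]; [:: 0; 2; 3; 6; 15]; [:: 5; 7; 9; 11; 12]; [:: 1; 4; 9; 10; 12]; [:: 0; 3; 4; 5; 14]; [:: 1; 2; 5; 6; 8]; [:: 0; 2; 12; 13; 15]; [:: 3; 8; 10; 14; 15]; [:: 1; 3; 4; 11; 13]; [:: 2; 7; 8; 12; 14]; [:: 0; 4; 6; 10; 14]; [:: 0; 4; 7; 11; 15]; [:: 3; 6; 7; 9; 13]; [:: 2; 3; 8; 10; 12]; [:: 6; 8; 11; 12; 15]; [:: 1; 5; 10; 13; 15]; [:: 0; 1; 5; 6; 7]; [:: 2; 3; 5; 9; 14]; [:: 0; 8; 9; 12; 14]; [:: 1; 2; 6; 10; 13]; [:: 2; 4; 5; 6; 12]; [:: 1; 2; 4; 7; 8]; [:: 3; 7; 9;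 14; 15]; [:: 6; 7; 11; 12; 13]; [:: 0; 2; 9; 11; 15]; [:: 3; 5; 7; 10; 12]; [:: 0; 3; 6; 8; 11]; [:: 9; 10; 12; 13; 15]; [:: 0; 2; 10; 13; 14]; [:: 1; 6; 8; 11; 14]; [:: 4; 5; 9; 11; 14]; [:: 1; 3; 4; 14; 15]; [:: 3; 11; 13; 14; 15]; [:: 0; 2; 4; 7; 14]; [:: 1; 4; 5; 8; 13]; [:: 0; 1; 9; 11; 12]; [:: 2; 5; 8; 9; 10]; [:: 4; 7; 8; 10; 15]; [:: 2; 3; 4; 11; 12]; [:: 1; 5; 7; 8; 14]; [:: 0; 3; 6; 10; 13]; [:: 4; 6; 8; 13; 14]; [:: 1; 3; 5; 11; 15]; [:: 0; 2; 5; 9; 12]; [:: 2; 5; 6; 13; 15]; [:: 4; 6; 10; 11; 14]; [:: 0; 4; 9; 13; 15]; [:: 0; 3; 9; 10; 11]; [:: 1; 3; 6; 8; 15]; [:: 0; 6; 7; 9; 14]; [:: 4; 7; 8; 11; 12]; [:: 1; 5; 10; 12; 14]; [:: 1; 2; 4; 6; 14]; [:: 0; 1; 3; 8; 13]; [:: 0; 6; 7; 10; 12]; [:: 3; 6; 9; 11; 15]; [:: 1; 8; 9; 11; 13]; [:: 2; 4; 13; 14; 15]; [:: 3; 9; 10; 14; 15]; [:: 0; 3; 6; 7; 8]; [:: 5; 11; 12; 13; 14]; [:: 2; 7; 10; 12; 13]; [:: 3; 6; 9; 11; 13]; [:: 6; 7; 9; 10; 11]].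
Lemma ok13 : check_code e08 e18 add8 mul8 inv8 16 4.+1 8 G13 J13. Proof. by vm_compute. Qed.
Definition G14 := map (map c8) [:: [:: 7; 0; 0; 7; 6; 2; 5; 4; 4; 0; 0; 0; 0; 1; 0; 0]; [:: 2; 4; 6; 6; 4; 7; 5; 0; 1; 7; 6; 2; 6; 2; 2; 4]; [:: 7; 2; 7; 6; 7; 4; 5; 7; 6; 6; 4; 3; 5; 3; 4; 0]; [:: 1; 7; 5; 1; 4; 2; 6; 2; 4; 4; 7; 0; 2; 7; 1; 3]; [:: 7; 3; 5; 3; 2; 5; 1; 6; 0; 2; 1; 1; 7; 7; 0; 0]; [:: 2; 3; 2; 0; 4; 3; 0; 5; 7; 3; 5; 7; 1; 5; 5; 6]].
Definition J14 : seq (seq nat) := [:: [:: 0; 2; 6; 8; 9; 15]; [:: 0; 1; 10; 11; 12; 15]; [:: 0; 3; 5; 6; 11; 13]; [:: 2; 4; 5; 7; 12; 13]; [:: 1; 4; 6; 8; 11; 14]; [:: 3; 5; 7; 9; 10; 15]; [:: 0; 2; 3; 4; 10; 14]; [:: 6; 9; 10; 12; 13; 14]; [:: 1; 2; 7; 13; 14; 15]; [:: 0; 3; 7; 8; 12; 14]; [:: 2; 5; 8; 9; 10; 11]; [:: 1; 3; 4; 6; 7; 9]; [:: 1; 5; 8; 9; 12; 13]; [:: 0; 4; 8; 10; 13; 15]; [:: 0; 5; 7; 9; 11; 14]; [:: 3; 4; 5; 12; 14; 15]; [:: 1; 5; 6; 7; 8; 10]; [:: 4; 6; 7; 11; 12;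 15]; [:: 1; 2; 3; 11; 12; 13]; [:: 0; 1; 2; 4; 5; 15]; [:: 3; 8; 9; 11; 13; 15]; [:: 0; 2; 6; 7; 10; 12]; [:: 3; 7; 10; 11; 13; 14]; [:: 2; 4; 8; 9; 12; 14]; [:: 1; 2; 3; 6; 10; 15]; [:: 0; 1; 7; 9; 10; 13]; [:: 1; 2; 3; 5; 8; 14]; [:: 3; 4; 8; 10; 11; 12]; [:: 0; 5; 6; 10; 14; 15]; [:: 2; 3; 5; 6; 9; 12]; [:: 1; 4; 9; 10; 14; 15]; [:: 2; 3; 4; 7; 8; 15]; [:: 4; 5; 6; 8; 13; 14]; [:: 1; 3; 4; 5; 10; 13]; [:: 0; 2; 11; 13; 14; 15]; [:: 1; 2; 6; 7; 9; 11]; [:: 0; 1; 6; 8; 12; 13]; [:: 0; 1; 4; 7; 8; 11]; [:: 1; 5; 10; 11; 12; 14]; [:: 2; 4; 6; 9; 10; 13]; [:: 0; 5; 7; 8; 12; 15]; [:: 0; 1; 3; 4; 9; 12]; [:: 3; 6; 9; 11; 14; 15]; [:: 2; 8; 10; 12; 14; 15]; [:: 0; 2; 3; 7; 9; 13]; [:: 0; 1; 4; 6; 7; 14]; [:: 1; 4; 5; 11; 13; 15]; [:: 3; 6; 8; 12; 13; 15]; [:: 6; 7; 8; 10; 11; 13]; [:: 0; 2; 4; 9; 11; 12]; [:: 0; 3; 5; 8; 9; 10]; [:: 1; 5; 6; 9; 12; 15]; [:: 1; 3; 5; 7; 11; 12]; [:: 0; 1; 3; 13; 14; 15]; [:: 2;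 5; 6; 8; 11; 15]; [:: 4; 5; 7; 8; 10; 14]; [:: 1; 7; 8; 9; 14; 15]; [:: 0; 8; 9; 11; 13; 14]; [:: 4; 7; 10; 12; 13; 15]; [:: 0; 2; 5; 10; 11; 13]; [:: 2; 3; 4; 6; 11; 14]; [:: 0; 1; 2; 9; 10; 14]; [:: 2; 5; 6; 7; 13; 15]; [:: 0; 4; 6; 7; 9; 15]; [:: 0; 1; 3; 6; 8; 11]; [:: 2; 3; 5; 9; 13; 14]; [:: 1; 2; 8; 10; 12; 13]; [:: 4; 7; 9; 11; 12; 13]; [:: 3; 6; 7; 8; 13; 14]; [:: 2; 7; 10; 11; 14; 15]; [:: 1; 3; 6; 10; 12; 14]; [:: 0; 1; 2; 3; 5; 7]; [:: 3; 4; 5; 8; 9; 11]; [:: 6; 9; 10; 11; 12; 15]; [:: 0; 3; 4; 6; 7; 10]; [:: 2; 4; 6; 12; 13; 14]; [:: 0; 5; 6; 9; 12; 13]; [:: 2; 7; 8; 9; 10; 12]; [:: 0; 2; 5; 8; 11; 12]; [:: 5; 11; 12; 13; 14; 15]; [:: 2; 3; 4; 9; 10; 11]; [:: 0; 4; 5; 7; 13; 14]; [:: 1; 6; 9; 11; 13; 14]; [:: 2; 7; 9; 12; 14; 15]; [:: 1; 2; 4; 6; 8; 13]; [:: 1; 4; 6; 8; 9; 10]; [:: 1; 3; 7; 10; 11; 15]; [:: 0; 1; 2; 3; 12; 15]; [:: 5; 6; 7; 8; 12; 14]; [:: 0; 4; 5; 9; 11; 15]; [:: 0; 4; 8; 10;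 12; 14]; [:: 3; 5; 6; 10; 11; 14]; [:: 2; 4; 5; 6; 9; 14]; [:: 2; 5; 9; 10; 13; 15]; [:: 1; 2; 4; 7; 11; 14]; [:: 1; 4; 5; 7; 10; 12]; [:: 1; 2; 8; 9; 11; 15]; [:: 3; 8; 10; 13; 14; 15]; [:: 1; 3; 7; 8; 9; 13]; [:: 0; 2; 6; 7; 11; 14]; [:: 0; 3; 4; 6; 12; 15]; [:: 0; 1; 6; 9; 13; 15]; [:: 3; 4; 11; 12; 13; 14]; [:: 0; 1; 5; 8; 14; 15]; [:: 0; 3; 7; 10; 12; 15]; [:: 0; 3; 9; 10; 11; 14]; [:: 0; 2; 3; 6; 8; 13]; [:: 4; 5; 7; 8; 9; 13]; [:: 0; 1; 7; 11; 12; 13]; [:: 2; 3; 5; 10; 12; 13]; [:: 0; 1; 2; 4; 6; 12]; [:: 3; 5; 7; 8; 11; 13]; [:: 0; 1; 5; 6; 10; 11]; [:: 6; 7; 10; 13; 14; 15]; [:: 1; 4; 8; 12; 13; 15]; [:: 0; 6; 7; 8; 9; 11]; [:: 1; 2; 4; 10; 11; 13]; [:: 3; 8; 9; 11; 12; 14]; [:: 0; 5; 9; 10; 12; 14]; [:: 0; 2; 7; 8; 10; 15]; [:: 3; 4; 6; 11; 13; 15]; [:: 4; 5; 6; 8; 12; 15]; [:: 1; 3; 7; 12; 13; 14]; [:: 1; 2; 8; 9; 13; 14]; [:: 2; 3; 4; 5; 6; 7]; [:: 5; 8; 10; 11; 13; 15]; [:: 1; 2; 6; 12; 14; 15]; [::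 5; 6; 7; 9; 10; 13]; [:: 3; 4; 8; 9; 14; 15]; [:: 0; 1; 5; 6; 9; 14]; [:: 1; 2; 3; 4; 5; 9]; [:: 0; 2; 6; 10; 11; 15]; [:: 0; 9; 10; 11; 12; 13]; [:: 7; 8; 10; 11; 12; 14]; [:: 0; 3; 5; 6; 8; 15]; [:: 1; 2; 5; 10; 11; 15]; [:: 0; 4; 5; 7; 10; 11]; [:: 0; 1; 4; 5; 13; 14]; [:: 1; 7; 9; 12; 13; 15]; [:: 0; 1; 3; 7; 8; 10]; [:: 0; 2; 5; 12; 14; 15]; [:: 2; 3; 6; 7; 9; 14]; [:: 0; 3; 4; 9; 10; 13]; [:: 1; 3; 4; 11; 14; 15]; [:: 4; 6; 9; 10; 11; 14]; [:: 0; 4; 7; 11; 13; 15]; [:: 0; 1; 2; 5; 8; 13]; [:: 0; 3; 5; 6; 7; 12]; [:: 2; 4; 7; 8; 14; 15]; [:: 1; 4; 5; 8; 9; 12]; [:: 3; 4; 7; 10; 12; 14]; [:: 3; 4; 5; 6; 8; 10]; [:: 2; 9; 11; 12; 13; 15]; [:: 1; 3; 6; 8; 11; 12]; [:: 1; 5; 6; 7; 13; 15]; [:: 0; 4; 8; 9; 12; 15]; [:: 2; 5; 7; 10; 13; 14]; [:: 0; 1; 6; 11; 12; 14]; [:: 1; 3; 5; 9; 11; 13]; [:: 0; 2; 3; 4; 8; 11]; [:: 2; 3; 7; 10; 11; 12]; [:: 0; 8; 10; 11; 13; 14]; [:: 1; 2; 5; 9; 12; 14]; [:: 2; 3; 8;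 9; 12; 15]; [:: 1; 2; 3; 9; 10; 13]; [:: 4; 5; 6; 7; 9; 11]; [:: 3; 4; 5; 13; 14; 15]; [:: 0; 1; 2; 4; 7; 13]; [:: 4; 6; 7; 9; 12; 13]; [:: 0; 1; 3; 7; 9; 15]; [:: 2; 4; 5; 7; 9; 15]; [:: 2; 6; 11; 12; 13; 14]; [:: 0; 1; 2; 5; 10; 12]; [:: 2; 4; 5; 8; 11; 12]; [:: 8; 9; 10; 12; 14; 15]; [:: 0; 6; 7; 11; 12; 13]; [:: 2; 3; 7; 8; 14; 15]; [:: 1; 2; 4; 10; 12; 15]; [:: 0; 3; 4; 5; 11; 12]; [:: 6; 7; 8; 9; 13; 15]; [:: 0; 4; 8; 10; 11; 14]; [:: 0; 3; 12; 13; 14; 15]; [:: 0; 2; 3; 8; 10; 12]; [:: 0; 1; 6; 10; 14; 15]; [:: 0; 1; 3; 6; 13; 14]; [:: 0; 2; 3; 5; 9; 15]; [:: 1; 3; 5; 8; 13; 15]; [:: 5; 7; 9; 10; 11; 14]; [:: 1; 2; 4; 7; 8; 10]; [:: 2; 8; 9; 11; 13; 14]; [:: 0; 2; 4; 7; 9; 14]; [:: 0; 4; 5; 8; 10; 13]; [:: 1; 3; 9; 11; 12; 15]; [:: 1; 7; 8; 11; 13; 15]; [:: 4; 8; 9; 12; 13; 14]; [:: 2; 4; 5; 6; 10; 14]; [:: 1; 3; 6; 10; 11; 12]; [:: 1; 5; 9; 10; 14; 15]; [:: 3; 6; 7; 8; 12; 15]; [:: 1; 3; 5; 6; 11; 14];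 [:: 1; 5; 7; 8; 12; 14]; [:: 4; 5; 10; 12; 13; 15]; [:: 1; 3; 4; 6; 9; 15]; [:: 0; 1; 6; 8; 9; 12]; [:: 2; 3; 8; 10; 11; 14]; [:: 0; 2; 6; 7; 13; 14]; [:: 4; 6; 11; 12; 13; 14]; [:: 0; 2; 4; 6; 8; 12]; [:: 1; 5; 6; 8; 11; 13]; [:: 3; 6; 8; 9; 10; 11]; [:: 0; 2; 5; 7; 11; 15]; [:: 0; 3; 4; 6; 7; 11]; [:: 3; 6; 7; 10; 12; 13]; [:: 2; 3; 4; 9; 13; 14]; [:: 0; 3; 5; 8; 12; 14]; [:: 0; 1; 3; 4; 8; 15]; [:: 0; 5; 7; 8; 9; 10]; [:: 4; 7; 9; 11; 12; 15]; [:: 1; 4; 6; 7; 10; 15]; [:: 2; 6; 9; 10; 14; 15]; [:: 1; 2; 5; 6; 11; 12]; [:: 0; 1; 2; 3; 11; 13]; [:: 0; 3; 4; 5; 7; 9]; [:: 2; 4; 6; 8; 9; 11]; [:: 0; 2; 4; 12; 13; 14]; [:: 2; 4; 10; 11; 12; 13]; [:: 1; 3; 5; 6; 12; 13]; [:: 0; 1; 7; 9; 11; 14]; [:: 3; 5; 6; 7; 9; 15]; [:: 0; 1; 5; 7; 14; 15]; [:: 1; 4; 7; 10; 13; 14]; [:: 0; 2; 5; 8; 12; 13]; [:: 2; 8; 10; 13; 14; 15]; [:: 2; 3; 5; 7; 10; 14]; [:: 2; 3; 4; 7; 13; 15]; [:: 2; 3; 5; 6; 10; 11]; [:: 5; 8;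 9; 10; 13; 14]; [:: 0; 3; 8; 10; 14; 15]; [:: 2; 3; 7; 11; 12; 14]; [:: 0; 3; 4; 5; 6; 13]; [:: 0; 3; 9; 10; 13; 15]; [:: 4; 7; 8; 9; 10; 13]; [:: 0; 6; 8; 9; 11; 14]; [:: 5; 6; 7; 8; 11; 15]; [:: 5; 8; 12; 13; 14; 15]; [:: 4; 6; 7; 9; 12; 15]; [:: 0; 1; 7; 8; 11; 12]; [:: 0; 1; 2; 5; 7; 9]; [:: 1; 6; 7; 10; 11; 12]; [:: 1; 2; 7; 9; 10; 11]; [:: 2; 4; 5; 6; 11; 13]; [:: 1; 3; 4; 7; 8; 9]; [:: 2; 6; 7; 9; 11; 15]; [:: 3; 7; 8; 11; 12; 13]; [:: 0; 2; 5; 8; 9; 15]; [:: 0; 1; 2; 4; 9; 14]; [:: 5; 8; 9; 10; 11; 12]; [:: 1; 4; 5; 9; 10; 11]; [:: 1; 4; 5; 7; 12; 13]; [:: 3; 5; 7; 9; 11; 12]; [:: 0; 1; 11; 12; 14; 15]; [:: 8; 10; 12; 13; 14; 15]; [:: 1; 3; 9; 10; 13; 14]; [:: 3; 4; 6; 9; 11; 13]; [:: 3; 5; 7; 9; 14; 15]; [:: 0; 3; 4; 7; 8; 15]; [:: 1; 2; 6; 9; 10; 14]; [:: 2; 3; 6; 8; 11; 15]; [:: 1; 3; 6; 7; 8; 14]; [:: 0; 1; 3; 10; 11; 13]; [:: 1; 3; 7; 10; 12; 15]; [:: 0; 4; 5; 10; 12; 15]; [:: 2; 5; 6; 7; 9;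 11]; [:: 2; 5; 7; 10; 11; 14]; [:: 4; 6; 7; 12; 13; 14]; [:: 2; 4; 5; 11; 14; 15]; [:: 0; 5; 6; 7; 13; 14]; [:: 2; 3; 8; 9; 13; 15]; [:: 0; 6; 8; 10; 11; 13]; [:: 3; 4; 10; 11; 14; 15]; [:: 2; 3; 9; 10; 12; 14]].
Lemma ok14 : check_code e08 e18 add8 mul8 inv8 16 5.+1 8 G14 J14. Proof. by vm_compute. Qed.
Definition G15 := map (map c8) [:: [:: 1; 6; 0; 0; 5; 4; 0; 0; 0; 0; 5; 0; 3; 0; 0; 0]; [:: 4; 7; 5; 6; 0; 7; 1; 6; 6; 1; 0; 0; 6; 5; 2; 6]; [:: 3; 2; 3; 0; 2; 4; 6; 2; 7; 4; 4; 0; 6; 6; 2; 5]; [:: 0; 0; 6; 3; 2; 7; 6; 2; 1; 6; 4; 6; 7; 0; 4; 2]; [:: 2; 0; 6; 0; 5; 4; 6; 4; 1; 4; 0; 1; 1; 7; 2; 7]; [:: 7; 1; 7; 5; 0; 3; 7; 3; 0; 3; 1; 1; 1; 0; 1; 0]; [:: 2; 3; 7; 3; 6; 3; 3; 4; 6; 2; 5; 1; 0; 6; 3; 2]].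
Definition J15 : seq (seq nat) := [:: [:: 3; 4; 8; 9; 12; 14; 15]; [:: 0; 1; 2; 7; 9; 10; 14]; [:: 1; 3; 5; 6; 7; 11; 13]; [:: 2; 4; 8; 10; 11; 12; 13]; [:: 0; 5; 6; 7; 8; 12; 15]; [:: 0; 2; 6; 11; 13; 14; 15]; [:: 0; 3; 4; 5; 6; 9; 10]; [:: 1; 2; 3; 5; 10; 12; 15]; [:: 1; 4; 5; 7; 11; 14; 15]; [:: 0; 2; 3; 7; 8; 9; 11]; [:: 1; 2; 4; 6; 9; 12; 13]; [:: 1; 8; 9; 10; 11; 13; 15]; [:: 0; 3; 7; 10; 12; 13; 14]; [:: 2; 5; 6; 8; 9; 13; 14]; [:: 0; 1; 4; 6; 8; 10; 14]; [:: 6; 7; 9; 10; 11; 12; 14]; [:: 2; 4; 5; 7; 10; 13; 15]; [:: 0; 1; 4; 5; 9; 11; 12]; [:: 2; 3; 6; 7; 8; 10; 15]; [:: 0; 1; 3; 5; 8; 12; 13]; [:: 0; 3; 5; 10; 11; 14; 15]; [:: 3; 4; 6; 8; 11; 13; 15]; [:: 1; 3; 4; 7; 9; 13; 14]; [:: 1; 2; 5; 8; 11; 12; 14]; [:: 2; 3; 4; 5; 6; 7; 12]; [:: 0; 1; 7; 9; 12; 13; 15]; [:: 0; 1; 2; 4; 8; 9; 15]; [:: 1; 2; 3; 4; 6; 10; 11]; [:: 0; 4; 5; 7; 8; 11; 13]; [:: 3; 6; 9; 10; 11; 12; 13]; [:: 5; 7; 8; 9; 10; 14; 15]; [:: 0;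 2; 4; 10; 12; 14; 15]; [:: 0; 2; 3; 5; 9; 13; 15]; [:: 1; 3; 6; 8; 12; 14; 15]; [:: 4; 5; 6; 10; 12; 13; 15]; [:: 1; 3; 7; 8; 10; 11; 12]; [:: 2; 4; 6; 7; 9; 11; 14]; [:: 1; 5; 6; 7; 8; 10; 13]; [:: 0; 2; 3; 8; 11; 13; 14]; [:: 1; 5; 6; 9; 11; 14; 15]; [:: 1; 2; 4; 7; 8; 12; 15]; [:: 0; 3; 4; 6; 7; 9; 15]; [:: 2; 3; 5; 7; 9; 12; 14]; [:: 3; 4; 5; 8; 10; 13; 14]; [:: 0; 2; 5; 6; 7; 10; 12]; [:: 5; 6; 8; 9; 11; 12; 15]; [:: 0; 1; 3; 6; 13; 14; 15]; [:: 0; 4; 7; 8; 9; 10; 12]; [:: 1; 2; 7; 11; 12; 13; 14]; [:: 0; 1; 6; 8; 9; 12; 14]; [:: 0; 4; 9; 11; 13; 14; 15]; [:: 0; 1; 7; 8; 10; 11; 15]; [:: 2; 3; 4; 5; 11; 12; 15]; [:: 0; 1; 2; 5; 9; 11; 13]; [:: 0; 3; 5; 6; 8; 11; 14]; [:: 1; 3; 4; 7; 10; 12; 15]; [:: 1; 2; 3; 4; 5; 7; 8]; [:: 0; 2; 6; 8; 12; 13; 15]; [:: 2; 3; 10; 11; 13; 14; 15]; [:: 5; 7; 9; 11; 12; 13; 15]; [:: 0; 2; 3; 8; 9; 10; 14]; [:: 1; 4; 5; 10; 11; 13; 14]; [:: 1; 2; 4; 6; 9; 10; 15]; [:: 2;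 7; 8; 10; 12; 13; 14]; [:: 0; 1; 3; 4; 9; 10; 13]; [:: 3; 4; 6; 7; 11; 12; 14]; [:: 2; 4; 5; 6; 8; 10; 11]; [:: 0; 2; 4; 6; 7; 13; 15]; [:: 1; 4; 5; 6; 9; 12; 14]; [:: 1; 2; 3; 7; 9; 11; 15]; [:: 3; 6; 7; 9; 10; 13; 14]; [:: 0; 4; 6; 7; 8; 12; 13]; [:: 0; 2; 5; 9; 10; 12; 14]; [:: 0; 1; 2; 3; 7; 14; 15]; [:: 0; 1; 3; 5; 8; 10; 11]; [:: 1; 4; 6; 7; 9; 13; 15]; [:: 0; 4; 8; 12; 13; 14; 15]; [:: 0; 2; 3; 5; 7; 10; 11]; [:: 1; 6; 7; 8; 9; 10; 11]; [:: 0; 1; 2; 3; 6; 10; 13]; [:: 1; 3; 6; 9; 10; 12; 15]; [:: 5; 6; 11; 12; 13; 14; 15]; [:: 2; 3; 5; 8; 9; 11; 13]; [:: 0; 4; 5; 6; 11; 12; 14]; [:: 0; 5; 8; 9; 11; 13; 15]; [:: 1; 6; 7; 10; 13; 14; 15]; [:: 0; 2; 3; 9; 11; 12; 15]; [:: 0; 5; 7; 8; 9; 11; 12]; [:: 5; 8; 9; 10; 12; 14; 15]; [:: 6; 7; 8; 9; 11; 12; 14]; [:: 1; 2; 4; 7; 9; 12; 13]; [:: 1; 2; 3; 4; 8; 9; 10]; [:: 1; 2; 3; 9; 12; 13; 15]].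
Lemma ok15 : check_code e08 e18 add8 mul8 inv8 16 6.+1 6 G15 J15. Proof. by vm_compute. Qed.
Definition G16 := map (map c8) [:: [:: 0; 3; 0; 0; 1; 6; 0; 0; 3; 2; 0; 0; 0; 0; 0; 5]; [:: 4; 5; 7; 6; 3; 2; 1; 6; 6; 5; 3; 7; 6; 5; 2; 0]; [:: 3; 0; 2; 0; 5; 7; 2; 7; 5; 5; 2; 7; 3; 7; 4; 3]; [:: 7; 3; 2; 0; 2; 3; 4; 1; 1; 3; 6; 3; 4; 7; 0; 6]; [:: 6; 6; 0; 4; 5; 3; 0; 4; 4; 3; 6; 0; 7; 5; 6; 3]; [:: 1; 7; 0; 2; 5; 5; 1; 2; 0; 6; 2; 0; 7; 7; 5; 6]; [:: 2; 7; 1; 4; 2; 1; 0; 6; 6; 6; 3; 0; 0; 3; 5; 0]; [:: 1; 6; 6; 3; 5; 7; 2; 0; 2; 7; 2; 7; 2; 2; 4; 6]].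
Definition J16 : seq (seq nat) := [:: [:: 0; 1; 4; 5; 9; 10; 12; 14]; [:: 0; 1; 3; 6; 8; 10; 13; 15]; [:: 3; 4; 8; 9; 11; 13; 14; 15]; [:: 0; 1; 2; 3; 7; 9; 12; 15]; [:: 1; 2; 3; 4; 5; 7; 8; 13]; [:: 0; 5; 6; 7; 8; 9; 13; 14]; [:: 5; 7; 8; 9; 10; 11; 12; 15]; [:: 1; 2; 6; 8; 10; 11; 12; 14]; [:: 0; 2; 3; 4; 6; 7; 10; 11]; [:: 2; 4; 5; 6; 10; 12; 13; 15]; [:: 1; 4; 7; 11; 12; 13; 14; 15]; [:: 1; 3; 5; 6; 7; 9; 11; 14]; [:: 0; 2; 3; 5; 11; 12; 14; 15]; [:: 0; 1; 2; 5; 9; 10; 11; 13]; [:: 3; 6; 7; 9; 10; 12; 13; 14]; [:: 2; 4; 5; 6; 8; 9; 11; 15]; [:: 0; 2; 4; 7; 8; 10; 12; 14]; [:: 0; 1; 5; 6; 7; 8; 12; 15]; [:: 1; 2; 6; 7; 9; 10; 14; 15]; [:: 0; 1; 3; 4; 8; 11; 12; 13]; [:: 2; 3; 5; 7; 10; 13; 14; 15]; [:: 3; 4; 5; 6; 8; 9; 10; 12]; [:: 0; 4; 6; 7; 9; 11; 12; 13]; [:: 0; 2; 7; 8; 11; 13; 14; 15]; [:: 0; 1; 4; 6; 9; 13; 14; 15]; [:: 0; 2; 3; 5; 8; 9; 12; 13]; [:: 1; 2; 3; 6; 11; 12; 13; 15]; [:: 1; 3; 4; 7; 8; 9; 10;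 11]; [:: 3; 4; 5; 6; 10; 11; 13; 14]; [:: 1; 3; 5; 8; 10; 12; 14; 15]; [:: 2; 3; 4; 5; 6; 7; 12; 14]; [:: 0; 2; 3; 4; 9; 10; 13; 15]; [:: 0; 3; 5; 7; 8; 10; 11; 14]; [:: 2; 4; 9; 10; 11; 12; 13; 14]; [:: 0; 1; 2; 3; 6; 8; 9; 11]; [:: 1; 4; 5; 6; 7; 10; 11; 12]; [:: 0; 1; 7; 8; 9; 10; 12; 13]; [:: 1; 2; 4; 5; 6; 8; 13; 14]; [:: 0; 1; 3; 4; 10; 11; 14; 15]; [:: 0; 4; 5; 6; 7; 9; 10; 15]; [:: 0; 3; 4; 6; 7; 8; 12; 15]; [:: 2; 6; 7; 8; 10; 11; 13; 15]; [:: 1; 2; 4; 7; 8; 9; 12; 15]; [:: 0; 5; 6; 8; 10; 11; 12; 13]; [:: 0; 1; 2; 3; 5; 6; 10; 14]; [:: 1; 3; 5; 6; 9; 12; 13; 15]; [:: 0; 2; 4; 5; 8; 9; 14; 15]; [:: 2; 5; 6; 9; 11; 13; 14; 15]; [:: 0; 3; 5; 7; 11; 12; 13; 15]; [:: 0; 4; 6; 8; 9; 11; 12; 14]; [:: 1; 4; 7; 8; 10; 13; 14; 15]; [:: 0; 1; 2; 4; 5; 7; 9; 11]; [:: 1; 2; 3; 4; 9; 11; 12; 14]; [:: 2; 3; 6; 8; 12; 13; 14; 15]; [:: 1; 2; 4; 6; 7; 9; 10; 13]; [:: 0; 1; 2; 3; 7; 11; 13; 14]; [:: 0; 2; 6;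 8; 9; 10; 12; 15]; [:: 2; 5; 7; 8; 9; 11; 12; 14]; [:: 0; 1; 2; 5; 12; 13; 14; 15]; [:: 0; 1; 9; 10; 11; 12; 14; 15]; [:: 0; 3; 4; 6; 8; 10; 13; 14]; [:: 2; 3; 4; 5; 8; 10; 11; 12]; [:: 3; 4; 7; 9; 10; 11; 12; 15]; [:: 0; 1; 3; 4; 7; 8; 9; 14]; [:: 1; 3; 7; 8; 9; 11; 13; 15]; [:: 0; 1; 5; 6; 8; 11; 14; 15]; [:: 0; 1; 4; 5; 7; 10; 11; 13]; [:: 2; 3; 5; 6; 8; 9; 10; 13]; [:: 0; 2; 6; 7; 11; 12; 14; 15]; [:: 2; 3; 8; 9; 10; 11; 14; 15]; [:: 1; 2; 3; 5; 6; 7; 11; 15]; [:: 1; 5; 6; 7; 8; 12; 13; 14]; [:: 1; 4; 6; 8; 9; 10; 11; 15]; [:: 0; 1; 3; 4; 5; 9; 12; 15]; [:: 4; 5; 6; 7; 8; 10; 14; 15]; [:: 0; 2; 4; 8; 10; 11; 13; 15]; [:: 0; 2; 3; 6; 9; 10; 11; 12]; [:: 2; 3; 4; 5; 7; 9; 13; 14]; [:: 0; 1; 2; 3; 7; 8; 10; 12]; [:: 0; 3; 4; 5; 6; 8; 11; 13]; [:: 0; 3; 6; 7; 10; 12; 14; 15]; [:: 3; 4; 5; 7; 8; 12; 13; 15]; [:: 1; 5; 8; 9; 10; 13; 14; 15]; [:: 0; 3; 5; 6; 9; 12; 13; 14]; [:: 0; 7; 9; 10; 11; 13; 14; 15]; [::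 1; 2; 5; 7; 11; 12; 13; 15]; [:: 1; 3; 6; 7; 8; 9; 11; 12]; [:: 2; 4; 6; 7; 8; 9; 13; 14]; [:: 1; 2; 3; 4; 5; 6; 10; 15]; [:: 4; 5; 6; 9; 11; 12; 14; 15]; [:: 0; 2; 5; 7; 9; 10; 12; 13]; [:: 0; 1; 3; 4; 10; 12; 13; 14]; [:: 1; 2; 5; 7; 8; 9; 10; 14]; [:: 0; 3; 5; 6; 7; 8; 9; 15]; [:: 0; 1; 2; 4; 8; 11; 12; 15]; [:: 0; 1; 6; 7; 10; 11; 12; 13]; [:: 3; 5; 9; 10; 11; 12; 13; 14]; [:: 0; 1; 4; 5; 6; 10; 12; 13]; [:: 2; 4; 6; 7; 8; 11; 14; 15]; [:: 0; 1; 2; 3; 8; 9; 13; 14]; [:: 0; 2; 5; 6; 7; 8; 11; 12]; [:: 1; 3; 5; 6; 7; 10; 13; 15]; [:: 0; 1; 2; 4; 5; 6; 9; 13]; [:: 2; 3; 7; 8; 10; 12; 13; 14]; [:: 0; 5; 6; 8; 9; 10; 11; 14]; [:: 1; 2; 5; 7; 10; 11; 14; 15]; [:: 1; 4; 6; 8; 9; 10; 12; 14]; [:: 0; 2; 4; 6; 10; 12; 14; 15]; [:: 1; 2; 3; 4; 9; 10; 11; 13]; [:: 4; 5; 7; 8; 9; 11; 13; 14]; [:: 3; 5; 7; 8; 9; 12; 14; 15]; [:: 2; 3; 4; 6; 7; 12; 13; 15]; [:: 0; 3; 4; 5; 8; 10; 11; 15]; [:: 1; 3; 4; 6; 7; 11;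 12; 14]; [:: 0; 2; 4; 5; 6; 7; 13; 14]; [:: 0; 1; 6; 7; 9; 11; 13; 15]; [:: 1; 2; 4; 5; 10; 12; 13; 15]; [:: 1; 2; 8; 9; 11; 12; 13; 14]; [:: 6; 8; 10; 11; 12; 13; 14; 15]; [:: 0; 1; 5; 8; 11; 12; 13; 15]; [:: 1; 2; 3; 4; 5; 8; 12; 14]; [:: 0; 2; 3; 4; 6; 9; 11; 15]; [:: 0; 1; 3; 4; 5; 11; 13; 14]; [:: 0; 3; 4; 7; 8; 9; 12; 13]; [:: 0; 1; 2; 5; 6; 7; 8; 10]; [:: 1; 3; 4; 6; 7; 8; 13; 15]; [:: 2; 3; 5; 7; 9; 10; 11; 13]; [:: 2; 5; 6; 7; 8; 10; 12; 13]; [:: 0; 2; 3; 4; 5; 7; 10; 15]; [:: 3; 4; 6; 7; 9; 10; 11; 14]; [:: 0; 4; 7; 11; 12; 13; 14; 15]; [:: 0; 2; 6; 7; 9; 10; 11; 14]; [:: 1; 2; 3; 5; 7; 8; 9; 15]; [:: 1; 3; 4; 5; 7; 10; 12; 14]; [:: 1; 2; 5; 8; 10; 11; 13; 15]; [:: 0; 1; 3; 6; 8; 12; 13; 14]; [:: 1; 2; 4; 5; 8; 9; 11; 12]; [:: 0; 1; 2; 3; 6; 9; 14; 15]; [:: 0; 1; 4; 7; 9; 10; 13; 15]; [:: 0; 2; 3; 4; 7; 8; 11; 14]; [:: 0; 1; 7; 8; 10; 11; 14; 15]; [:: 4; 5; 7; 8; 9; 12; 13; 15]; [:: 4; 6;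 9; 10; 12; 13; 14; 15]; [:: 0; 1; 2; 4; 6; 10; 11; 13]; [:: 1; 3; 5; 6; 9; 10; 11; 15]; [:: 0; 2; 3; 6; 7; 8; 9; 14]; [:: 1; 3; 4; 8; 10; 12; 13; 15]; [:: 0; 1; 2; 5; 8; 12; 13; 14]; [:: 1; 3; 4; 5; 6; 9; 10; 14]; [:: 0; 2; 3; 4; 5; 8; 9; 11]; [:: 1; 2; 4; 6; 7; 8; 10; 11]; [:: 0; 3; 4; 5; 10; 13; 14; 15]; [:: 0; 1; 2; 3; 4; 6; 7; 9]; [:: 2; 3; 4; 6; 7; 10; 14; 15]; [:: 0; 1; 3; 10; 11; 12; 13; 15]; [:: 1; 2; 3; 5; 6; 7; 11; 12]; [:: 0; 3; 6; 8; 10; 11; 13; 15]; [:: 1; 5; 6; 7; 9; 12; 14; 15]; [:: 1; 7; 8; 9; 10; 11; 13; 14]; [:: 3; 5; 6; 7; 8; 9; 10; 13]; [:: 1; 2; 5; 6; 9; 11; 12; 14]; [:: 0; 1; 2; 5; 6; 10; 11; 15]; [:: 0; 1; 3; 5; 9; 10; 12; 14]; [:: 0; 1; 4; 6; 8; 12; 13; 15]; [:: 2; 3; 4; 8; 9; 11; 12; 13]; [:: 2; 3; 5; 7; 10; 11; 13; 14]; [:: 2; 3; 7; 8; 11; 12; 13; 15]; [:: 1; 2; 3; 4; 9; 13; 14; 15]; [:: 5; 8; 10; 11; 12; 13; 14; 15]; [:: 0; 2; 4; 7; 9; 10; 11; 12]; [:: 1; 4; 5; 6; 8; 11; 12; 14];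 [:: 1; 2; 4; 7; 8; 11; 12; 14]; [:: 0; 1; 2; 5; 6; 7; 8; 15]; [:: 0; 6; 7; 8; 12; 13; 14; 15]; [:: 1; 4; 5; 7; 9; 11; 14; 15]; [:: 0; 1; 3; 4; 7; 8; 12; 14]; [:: 3; 5; 6; 7; 11; 12; 14; 15]; [:: 1; 2; 3; 6; 8; 10; 12; 13]; [:: 0; 2; 6; 8; 9; 10; 13; 14]; [:: 2; 4; 8; 9; 10; 12; 13; 15]; [:: 1; 2; 3; 4; 8; 11; 13; 15]; [:: 0; 1; 2; 4; 5; 8; 9; 14]; [:: 0; 2; 3; 8; 10; 12; 14; 15]; [:: 0; 3; 4; 6; 9; 11; 12; 15]; [:: 0; 1; 5; 8; 9; 10; 11; 15]; [:: 0; 4; 5; 6; 9; 11; 13; 14]; [:: 0; 1; 3; 4; 5; 6; 7; 14]; [:: 0; 3; 5; 7; 8; 9; 11; 14]; [:: 0; 2; 4; 5; 6; 7; 9; 13]; [:: 1; 2; 3; 9; 11; 13; 14; 15]; [:: 0; 2; 4; 6; 11; 12; 13; 15]].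
Lemma ok16 : check_code e08 e18 add8 mul8 inv8 16 7.+1 6 G16 J16. Proof. by vm_compute. Qed.

Theorem theorem15 :
  (forall F : finFieldType, #|F| = 4 ->
     [/\ exists_SO_code F 8 2 4, exists_SO_code F 8 3 4 & exists_SO_code F 8 4 4]) /\
  (forall F : finFieldType, #|F| = 8 ->
     exists_SO_code F 8 3 4 /\ exists_SO_code F 8 4 4 /\
     exists_SO_code F 10 4 5 /\ exists_SO_code F 10 5 4 /\
     exists_SO_code F 12 4 6 /\ exists_SO_code F 12 5 6 /\
     exists_SO_code F 12 6 5 /\ exists_SO_code F 14 5 7 /\
     exists_SO_code F 14 6 6 /\ exists_SO_code F 14 7 6 /\
     exists_SO_code F 16 5 8 /\ exists_SO_code F 16 6 8 /\
     exists_SO_code F 16 7 6 /\ exists_SO_code F 16 8 6).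
Proof.
split.
  move=> F hF.
  have c := fun n k d G Js (h : check_code e04 e14 add4 mul4 inv4 n k.+1 d G Js) => F4_code hF h.
  exact: (And3 (c _ _ _ _ _ ok0) (c _ _ _ _ _ ok1) (c _ _ _ _ _ ok2)).
move=> F hF.
have c := fun n k d G Js (h : check_code e08 e18 add8 mul8 inv8 n k.+1 d G Js) => F8_code hF h.
exact: (conj (c _ _ _ _ _ ok3) (conj (c _ _ _ _ _ ok4) (conj (c _ _ _ _ _ ok5) (conj (c _ _ _ _ _ ok6) (conj (c _ _ _ _ _ ok7) (conj (c _ _ _ _ _ ok8) (conj (c _ _ _ _ _ ok9) (conj (c _ _ _ _ _ ok10) (conj (c _ _ _ _ _ ok11) (conj (c _ _ _ _ _ ok12) (conj (c _ _ _ _ _ ok13) (conj (c _ _ _ _ _ ok14) (conj (c _ _ _ _ _ ok15) (c _ _ _ _ _ ok16)))))))))))))).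
Qed.
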